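(* Let $G$ be a path graph with $L=\lambda_1+\lambda_2$ edges, rooted at a vertex $O$ that is not an endpoint: there are $\lambda_1\ge1$ edges on one side of $O$ and $\lambda_2\ge1$ on the other. Let all edges have activation probability $p\in(0,1]$. Let $\varepsilon^*$ be the hider's distribution that puts probability $\lambda_1/L$ on the extreme (leaf) edge of the first side and $\lambda_2/L$ on the extreme edge of the second side. Then every depth-first strategy of the searcher is a best response to $\varepsilon^*$. Hence $\varepsilon^*$ and the uniform depth-first strategy form a pair of optimal strategies.
   Context: Setting: the stochastic search game on $G$. Every edge has length $1$ and is active at each stage independently with probability $p$. The hider chooses an edge and stays there. The searcher starts at $O$; at each stage, knowing which edges are currently active, she waits or traverses an active edge incident to her position. The hider's payoff is the expected first time the searcher traverses his edge. View the path as a tree rooted at $O$ with edges oriented away from $O$. A depth-first strategy (DFS) acts as follows at the searcher's current vertex: - if some untraversed outgoing edge is active, traverse one of them (possibly chosen at random); - if all untraversed outgoing edges are inactive, wait; - if all outgoing edges have been traversed, traverse the edge back toward $O$ when active, and wait otherwise. The uniform DFS chooses uniformly among the active untraversed outgoing edges. *)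

(* Defs.v *)
(* the stochastic search game on a path, with probabilities
   computed as finite sums over histories and expectations as series. *)
From Stdlib Require Import Reals List Arith Bool.
Import ListNotations.
Open Scope R_scope.

(* The path graph: vertices 0..L, edge j joins vertices j and j+1 (j < L).
   The root O is vertex l1, so there are l1 edges on the first (left) side and
   L - l1 on the second (right) side.  Edge 0 and edge L-1 are the extreme
   (leaf) edges of the first and second side. *)

Inductive act := Wait | GoL | GoR.

Definition act_eqb (x y : act) : bool :=
  match x, y with
  | Wait, Wait | GoL, GoL | GoR, GoR => true
  | _, _ => false
  end.

Definition act_mem (x : act) (l : list act) : bool := existsb (act_eqb x) l.

Definition mem_nat (e : nat) (l : list nat) : bool := existsb (Nat.eqb e) l.

(* activation configuration: entry j says whether edge j is active *)
Definition cfg := list bool.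

Definition edge_active (a : cfg) (j : nat) : bool := nth j a false.

Definition feasb (L : nat) (a : cfg) (v : nat) (x : act) : bool :=
  match x with
  | Wait => true
  | GoL => (0 <? v)%nat && edge_active a (v - 1)
  | GoR => (v <? L)%nat && edge_active a v
  end.

Definition edge_of (v : nat) (x : act) : nat :=
  match x with GoL => (v - 1)%nat | _ => v end.

Definition step_pos (v : nat) (x : act) : nat :=
  match x with Wait => v | GoL => (v - 1)%nat | GoR => (v + 1)%nat end.

(* histories: chronological lists of (activation at the stage, action taken) *)
Definition hist := list (cfg * act).

Fixpoint pos_after (v : nat) (h : hist) : nat :=
  match h with
  | [] => v
  | (_, x) :: h' => pos_after (step_pos v x) h'
  end.

Fixpoint crossed (v : nat) (h : hist) : list nat :=
  match h with
  | [] => []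
  | (_, Wait) :: h' => crossed v h'
  | (_, x) :: h' => edge_of v x :: crossed (step_pos v x) h'
  end.

(* behavioural (possibly randomized) searcher strategy:
   probability of action x given the past history and current activations *)
Definition strategy := hist -> cfg -> act -> R.

Definition valid_strategy (L O : nat) (s : strategy) : Prop :=
  forall (h : hist) (a : cfg),
    (forall x, 0 <= s h a x) /\
    (forall x, feasb L a (pos_after O h) x = false -> s h a x = 0) /\
    s h a Wait + s h a GoL + s h a GoR = 1.

Fixpoint all_cfgs (n : nat) : list cfg :=
  match n with
  | 0%nat => [[]]
  | S n => flat_map (fun c => [true :: c; false :: c]) (all_cfgs n)
  end.

Definition cfg_prob (p : R) (a : cfg) : R :=
  fold_right (fun (b : bool) (acc : R) => (if b then p else 1 - p) * acc) 1 a.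

Fixpoint all_hists (L t : nat) : list hist :=
  match t with
  | 0%nat => [[]]
  | S t => flat_map (fun h => flat_map (fun a =>
             map (fun x => h ++ [(a, x)]) [Wait; GoL; GoR]) (all_cfgs L))
           (all_hists L t)
  end.

Fixpoint hist_prob_aux (p : R) (s : strategy) (past future : hist) : R :=
  match future with
  | [] => 1
  | (a, x) :: f => cfg_prob p a * s past a x * hist_prob_aux p s (past ++ [(a, x)]) f
  end.

Definition hist_prob (p : R) (s : strategy) (h : hist) : R := hist_prob_aux p s [] h.

Definition rsum (f : nat -> R) (n : nat) : R :=
  fold_right (fun i acc => f i + acc) 0 (seq 0 n).

(* P(T > t): probability that edge e is not traversed during stages 1..t *)
Definition surv (L O : nat) (p : R) (s : strategy) (e t : nat) : R :=
  fold_right Rplus 0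
    (map (fun h => hist_prob p s h * (if mem_nat e (crossed O h) then 0 else 1))
       (all_hists L t)).

(* partial sums of E[T] = sum_{t>=0} P(T > t), against a mixed hider q *)
Definition partial_payoff (L O : nat) (p : R) (s : strategy) (q : nat -> R) (n : nat) : R :=
  rsum (fun e => q e * rsum (fun t => surv L O p s e t) n) L.

(* payoff(s1,q1) <= payoff(s2,q2) as extended reals (sups of nondecreasing
   partial sums, possibly +infinity) *)
Definition payoff_le (L O : nat) (p : R) (s1 : strategy) (q1 : nat -> R)
  (s2 : strategy) (q2 : nat -> R) : Prop :=
  forall n, exists m, partial_payoff L O p s1 q1 n <= partial_payoff L O p s2 q2 m.

Definition hider_dist (L : nat) (q : nat -> R) : Prop :=
  (forall e, (e < L)%nat -> 0 <= q e) /\ rsum q L = 1.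

Definition best_response (L O : nat) (p : R) (s : strategy) (q : nat -> R) : Prop :=
  valid_strategy L O s /\
  forall s', valid_strategy L O s' -> payoff_le L O p s q s' q.

Definition eps_star (l1 l2 : nat) : nat -> R :=
  fun e => if (e =? 0)%nat then INR l1 / INR (l1 + l2)
           else if (e =? l1 + l2 - 1)%nat then INR l2 / INR (l1 + l2) else 0.

(* outgoing moves (edges oriented away from O) at vertex v *)
Definition outgoing (L O v : nat) : list act :=
  if (v =? O)%nat then [GoL; GoR]
  else if (v <? O)%nat then (if (0 <? v)%nat then [GoL] else [])
  else (if (v <? L)%nat then [GoR] else []).

Definition back (O v : nat) : option act :=
  if (v =? O)%nat then None else if (v <? O)%nat then Some GoR else Some GoL.

Definition untrav_out (L O : nat) (h : hist) : list act :=
  let v := pos_after O h in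
  filter (fun x => negb (mem_nat (edge_of v x) (crossed O h))) (outgoing L O v).

Definition active_untrav_out (L O : nat) (h : hist) (a : cfg) : list act :=
  filter (feasb L a (pos_after O h)) (untrav_out L O h).

Definition is_DFS (L O : nat) (s : strategy) : Prop :=
  valid_strategy L O s /\
  forall (h : hist) (a : cfg),
    let v := pos_after O h in
    let U := untrav_out L O h in
    let UA := active_untrav_out L O h a in
    (UA <> [] -> forall x, act_mem x UA = false -> s h a x = 0) /\
    (UA = [] -> U <> [] -> s h a Wait = 1) /\
    (U = [] ->
       match back O v with
       | Some b => (feasb L a v b = true -> s h a b = 1) /\
                   (feasb L a v b = false -> s h a Wait = 1)
       | None => s h a Wait = 1
       end).

Definition ind (b : bool) : R := if b then 1 else 0.

Definition uDFS (L O : nat) : strategy :=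
  fun h a x =>
    let v := pos_after O h in
    let U := untrav_out L O h in
    let UA := active_untrav_out L O h a in
    match UA with
    | _ :: _ => if act_mem x UA then / INR (length UA) else 0
    | [] =>
      match U with
      | _ :: _ => ind (act_eqb x Wait)
      | [] =>
        match back O v with
        | Some b => if feasb L a v b then ind (act_eqb x b) else ind (act_eqb x Wait)
        | None => ind (act_eqb x Wait)
        end
      end
    end.

(* Main.v *)
Require Import Defs.
From Stdlib Require Import Reals List Arith Bool Lra Lia ZArith.
Import ListNotations.
Open Scope R_scope.

Module P1.

Definition lsum {A : Type} (l : list A) (f : A -> R) : R :=
  fold_right (fun x acc => f x + acc) 0 l.

Lemma lsum_nil {A} (f : A -> R) : lsum [] f = 0.
Proof. reflexivity. Qed.

Lemma lsum_cons {A} (x : A) l f : lsum (x :: l) f = f x + lsum l f.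
Proof. reflexivity. Qed.

Lemma lsum_app {A} (l1 l2 : list A) f : lsum (l1 ++ l2) f = lsum l1 f + lsum l2 f.
Proof. induction l1; simpl; [lra|]. unfold lsum in *; simpl. rewrite IHl1. lra. Qed.

Lemma lsum_map {A B} (g : A -> B) l f : lsum (map g l) f = lsum l (fun x => f (g x)).
Proof. induction l; simpl; auto. unfold lsum in *; simpl; rewrite IHl; auto. Qed.

Lemma lsum_flat_map {A B} (g : A -> list B) l f :
  lsum (flat_map g l) f = lsum l (fun x => lsum (g x) f).
Proof. induction l; simpl; auto. rewrite lsum_app, IHl. reflexivity. Qed.

Lemma lsum_ext {A} (l : list A) f g : (forall x, In x l -> f x = g x) -> lsum l f = lsum l g.
Proof.
  induction l; intros H; simpl; auto. unfold lsum in *; simpl.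
  rewrite H by (left; auto). rewrite IHl; auto. intros; apply H; right; auto.
Qed.

Lemma lsum_le {A} (l : list A) f g : (forall x, In x l -> f x <= g x) -> lsum l f <= lsum l g.
Proof.
  induction l; intros H; simpl; [lra|]. unfold lsum in *; simpl.
  assert (f a <= g a) by (apply H; left; auto).
  assert (fold_right (fun x acc => f x + acc) 0 l <= fold_right (fun x acc => g x + acc) 0 l)
    by (apply IHl; intros; apply H; right; auto). lra.
Qed.

Lemma lsum_plus {A} (l : list A) f g : lsum l (fun x => f x + g x) = lsum l f + lsum l g.
Proof. induction l; simpl; [lra|]. unfold lsum in *; simpl. rewrite IHl. lra. Qed.

Lemma lsum_scal {A} (l : list A) c f : lsum l (fun x => c * f x) = c * lsum l f.
Proof. induction l; simpl; [lra|]. unfold lsum in *; simpl. rewrite IHl. lra. Qed.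

Lemma lsum_nonneg {A} (l : list A) f : (forall x, In x l -> 0 <= f x) -> 0 <= lsum l f.
Proof.
  intros H. replace 0 with (lsum l (fun _ => 0)).
  apply lsum_le; auto. induction l; simpl; auto. unfold lsum in *; simpl.
  rewrite IHl; [lra|]. intros; apply H; right; auto.
Qed.

Lemma lsum_ge_term {A} (l : list A) f y : In y l -> (forall x, In x l -> 0 <= f x) -> f y <= lsum l f.
Proof.
  induction l; intros Hy H; simpl in *; [contradiction|]. unfold lsum in *; simpl.
  destruct Hy as [<-|Hy].
  - assert (0 <= fold_right (fun x acc => f x + acc) 0 l).
    { apply (lsum_nonneg l f). intros; apply H; right; auto. } lra.
  - assert (f y <= fold_right (fun x acc => f x + acc) 0 l).
    { apply IHl; auto. } assert (0 <= f a) by (apply H; left; auto). lra.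
Qed.

Lemma fold_map_lsum {A} (l : list A) f : fold_right Rplus 0 (map f l) = lsum l f.
Proof. induction l; simpl; auto. rewrite IHl; reflexivity. Qed.

Lemma rsum_lsum f n : rsum f n = lsum (seq 0 n) f.
Proof. reflexivity. Qed.

Lemma rsum_S f n : rsum f (S n) = rsum f n + f n.
Proof.
  rewrite !rsum_lsum, seq_S, lsum_app. rewrite lsum_cons, lsum_nil. simpl (0 + n)%nat. lra.
Qed.

Lemma rsum_shift f n : rsum f (S n) = f 0%nat + rsum (fun i => f (S i)) n.
Proof.
  rewrite !rsum_lsum. simpl. rewrite <- seq_shift, lsum_map. reflexivity.
Qed.

Lemma rsum_ext f g n : (forall i, (i < n)%nat -> f i = g i) -> rsum f n = rsum g n.
Proof.
  intros H. rewrite !rsum_lsum. apply lsum_ext. intros x Hx. apply in_seq in Hx. apply H; lia.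
Qed.

Lemma rsum_le f g n : (forall i, (i < n)%nat -> f i <= g i) -> rsum f n <= rsum g n.
Proof.
  intros H. rewrite !rsum_lsum. apply lsum_le. intros x Hx. apply in_seq in Hx. apply H; lia.
Qed.

Lemma rsum_plus f g n : rsum (fun i => f i + g i) n = rsum f n + rsum g n.
Proof. rewrite !rsum_lsum. apply lsum_plus. Qed.

Lemma rsum_scal c f n : rsum (fun i => c * f i) n = c * rsum f n.
Proof. rewrite !rsum_lsum. apply lsum_scal. Qed.

Lemma rsum_zero f n : (forall i, (i < n)%nat -> f i = 0) -> rsum f n = 0.
Proof.
  intros H. rewrite (rsum_ext f (fun _ => 0)) by auto. induction n; simpl; auto.
  rewrite rsum_S, IHn; [lra|]. intros; apply H; lia.
Qed.

Lemma rsum_two f n : (2 <= n)%nat -> (forall i, (0 < i < n - 1)%nat -> f i = 0) ->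
  rsum f n = f 0%nat + f (n - 1)%nat.
Proof.
  intros Hn H. destruct n as [|[|k]]; try lia.
  rewrite rsum_S, rsum_shift. rewrite rsum_zero.
  - replace (S (S k) - 1)%nat with (S k) by lia. lra.
  - intros i Hi. apply H. lia.
Qed.

Lemma rsum_wbound q f n Y : (forall e, (e < n)%nat -> 0 <= q e /\ f e <= Y) ->
  rsum (fun e => q e * f e) n <= Y * rsum q n.
Proof.
  intros H. rewrite <- rsum_scal. apply rsum_le. intros i Hi.
  destruct (H i Hi). rewrite Rmult_comm. apply Rmult_le_compat_r; auto.
Qed.

End P1.
Import P1.

Module P2.

Lemma cfg_step p n G :
  lsum (all_cfgs (S n)) (fun a => cfg_prob p a * G a) =
  lsum (all_cfgs n) (fun c => cfg_prob p c * (p * G (true :: c) + (1 - p) * G (false :: c))).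
Proof.
  simpl. rewrite lsum_flat_map. apply lsum_ext. intros c _.
  rewrite !lsum_cons, lsum_nil. simpl. ring.
Qed.

Lemma cfg_const p n K : lsum (all_cfgs n) (fun a => cfg_prob p a * K) = K.
Proof.
  induction n; [simpl; unfold lsum; simpl; ring|].
  rewrite cfg_step. rewrite (lsum_ext _ _ (fun c => cfg_prob p c * K)); [apply IHn|].
  intros; ring.
Qed.

Lemma cfg_nonneg p a : 0 <= p <= 1 -> 0 <= cfg_prob p a.
Proof.
  intros Hp. induction a; simpl; [lra|].
  destruct a; apply Rmult_le_pos; lra.
Qed.

Lemma cfg1 p n j (G : cfg -> R) (g : bool -> R) : (j < n)%nat ->
  (forall a, G a = g (nth j a false)) ->
  lsum (all_cfgs n) (fun a => cfg_prob p a * G a) = p * g true + (1 - p) * g false.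
Proof.
  revert j G. induction n; intros j G Hj HG; [lia|].
  rewrite cfg_step. destruct j.
  - rewrite <- (cfg_const p n (p * g true + (1 - p) * g false)).
    apply lsum_ext; intros; rewrite !HG; reflexivity.
  - rewrite <- (IHn j (fun c => g (nth j c false))); [|lia|reflexivity].
    apply lsum_ext; intros; rewrite !HG; simpl; ring.
Qed.

Lemma cfg2 p n j k (G : cfg -> R) (g : bool -> bool -> R) : (j < n)%nat -> (k < n)%nat -> j <> k ->
  (forall a, G a = g (nth j a false) (nth k a false)) ->
  lsum (all_cfgs n) (fun a => cfg_prob p a * G a) =
  p * p * g true true + p * (1 - p) * g true false + (1 - p) * p * g false true
  + (1 - p) * (1 - p) * g false false.
Proof.
  revert j k G. induction n; intros j k G Hj Hk Hjk HG; [lia|].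
  rewrite cfg_step. destruct j, k; try lia.
  - rewrite (lsum_ext _ _ (fun c => cfg_prob p c *
       (fun b => p * g true b + (1 - p) * g false b) (nth k c false))).
    + rewrite (cfg1 p n k (fun c => (fun b => p * g true b + (1 - p) * g false b) (nth k c false))
        (fun b => p * g true b + (1 - p) * g false b)); [ring|lia|reflexivity].
    + intros; rewrite !HG; simpl; ring.
  - rewrite (lsum_ext _ _ (fun c => cfg_prob p c *
       (fun b => p * g b true + (1 - p) * g b false) (nth j c false))).
    + rewrite (cfg1 p n j (fun c => (fun b => p * g b true + (1 - p) * g b false) (nth j c false))
        (fun b => p * g b true + (1 - p) * g b false)); [ring|lia|reflexivity].
    + intros; rewrite !HG; simpl; ring.
  - rewrite (lsum_ext _ _ (fun c => cfg_prob p c * g (nth j c false) (nth k c false))).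
    + apply (IHn j k); auto; lia.
    + intros; rewrite !HG; simpl; ring.
Qed.

Lemma cfg_p1 n G : lsum (all_cfgs n) (fun a => cfg_prob 1 a * G a) = G (repeat true n).
Proof.
  revert G. induction n; intros G; [simpl; unfold lsum; simpl; ring|].
  rewrite cfg_step. rewrite (lsum_ext _ _ (fun c => cfg_prob 1 c * G (true :: c))).
  - apply (IHn (fun c => G (true :: c))).
  - intros; ring.
Qed.

Lemma allfalse_in n : In (repeat false n) (all_cfgs n).
Proof.
  induction n; simpl; auto. apply in_flat_map. exists (repeat false n). split; auto.
  simpl; auto.
Qed.

Lemma cfg_prob_false p n : cfg_prob p (repeat false n) = (1 - p) ^ n.
Proof. induction n; simpl; auto. rewrite IHn; ring. Qed.

Lemma nth_repeat_false n j : nth j (repeat false n) false = false.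
Proof. revert j; induction n; intros [|j]; simpl; auto. Qed.

Lemma nth_repeat_true n j : (j < n)%nat -> nth j (repeat true n) false = true.
Proof. revert j; induction n; intros [|j] H; simpl; auto; try lia. apply IHn; lia. Qed.

Lemma hpa_app p s past f a x :
  hist_prob_aux p s past (f ++ [(a, x)]) = hist_prob_aux p s past f * (cfg_prob p a * s (past ++ f) a x).
Proof.
  revert past. induction f as [|[b y] f IH]; intros past; simpl.
  - rewrite app_nil_r. ring.
  - rewrite IH. rewrite <- app_assoc. simpl. ring.
Qed.

Lemma hp_app p s h a x : hist_prob p s (h ++ [(a, x)]) = hist_prob p s h * (cfg_prob p a * s h a x).
Proof. unfold hist_prob. rewrite hpa_app. reflexivity. Qed.

Lemma pos_app v h a x : pos_after v (h ++ [(a, x)]) = step_pos (pos_after v h) x.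
Proof. revert v; induction h as [|[b y] h IH]; intros v; simpl; auto. Qed.

Definition nz (x : act) : bool := match x with Wait => false | _ => true end.

Lemma crossed_app v h a x : crossed v (h ++ [(a, x)]) =
  crossed v h ++ (if nz x then [edge_of (pos_after v h) x] else []).
Proof.
  revert v; induction h as [|[b y] h IH]; intros v; simpl.
  - destruct x; reflexivity.
  - destruct y; simpl; rewrite IH; reflexivity.
Qed.

Lemma mem_nat_app e l1 l2 : mem_nat e (l1 ++ l2) = mem_nat e l1 || mem_nat e l2.
Proof. unfold mem_nat. apply existsb_app. Qed.

Lemma cr_app e v h a x : mem_nat e (crossed v (h ++ [(a, x)])) =
  mem_nat e (crossed v h) || (nz x && (e =? edge_of (pos_after v h) x)%nat).
Proof.
  rewrite crossed_app, mem_nat_app. destruct x; simpl; try rewrite orb_false_r; auto;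
  unfold mem_nat; simpl; rewrite orb_false_r; auto.
Qed.

Lemma hist_prob_nil p s : hist_prob p s [] = 1.
Proof. reflexivity. Qed.

End P2.
Import P2.

Module P3.

Definition sx (s : strategy) (h : hist) (a : cfg) (V : act -> R) : R :=
  s h a Wait * V Wait + s h a GoL * V GoL + s h a GoR * V GoR.

Section ExSec.
Variables (L O : nat) (p : R).
Hypothesis Hp : 0 <= p <= 1.

Definition Ex (s : strategy) (t : nat) (f : hist -> R) : R :=
  lsum (all_hists L t) (fun h => hist_prob p s h * f h).

Definition step (s : strategy) (f : hist -> R) (h : hist) : R :=
  lsum (all_cfgs L) (fun a => cfg_prob p a * sx s h a (fun x => f (h ++ [(a, x)]))).

Lemma Ex_S s t f : Ex s (S t) f = Ex s t (step s f).
Proof.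
  unfold Ex, step. simpl. rewrite lsum_flat_map. apply lsum_ext. intros h _.
  rewrite lsum_flat_map. rewrite <- lsum_scal. apply lsum_ext. intros a _.
  rewrite !lsum_cons, lsum_nil. rewrite !hp_app. unfold sx. ring.
Qed.

Lemma Ex_0 s f : Ex s 0 f = f [].
Proof. unfold Ex. simpl. unfold lsum; simpl. rewrite hist_prob_nil. ring. Qed.

Lemma Ex_plus s t f g : Ex s t (fun h => f h + g h) = Ex s t f + Ex s t g.
Proof. unfold Ex. rewrite <- lsum_plus. apply lsum_ext; intros; ring. Qed.

Lemma Ex_scal s t c f : Ex s t (fun h => c * f h) = c * Ex s t f.
Proof. unfold Ex. rewrite <- lsum_scal. apply lsum_ext; intros; ring. Qed.

Variable s : strategy.
Hypothesis Hs : valid_strategy L O s.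

Lemma s_nonneg h a x : 0 <= s h a x.
Proof. destruct (Hs h a) as [H _]. apply H. Qed.

Lemma s_sum h a : s h a Wait + s h a GoL + s h a GoR = 1.
Proof. destruct (Hs h a) as [_ [_ H]]. exact H. Qed.

Lemma s_feas h a x : s h a x <> 0 -> feasb L a (pos_after O h) x = true.
Proof.
  intros H. destruct (feasb L a (pos_after O h) x) eqn:E; auto.
  destruct (Hs h a) as [_ [H2 _]]. exfalso; apply H; apply H2; auto.
Qed.

Lemma hp_nonneg h : 0 <= hist_prob p s h.
Proof.
  induction h as [|[a x] h IH] using rev_ind.
  - rewrite hist_prob_nil; lra.
  - rewrite hp_app. apply Rmult_le_pos; auto. apply Rmult_le_pos.
    apply cfg_nonneg; auto. apply s_nonneg.
Qed.

Lemma reach (P : hist -> Prop) : P [] ->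
  (forall h a x, P h -> s h a x <> 0 -> P (h ++ [(a, x)])) ->
  forall h, hist_prob p s h <> 0 -> P h.
Proof.
  intros H0 Hst h. induction h as [|[a x] h IH] using rev_ind; intros Hne; auto.
  rewrite hp_app in Hne. apply Hst.
  - apply IH. intros E; apply Hne; rewrite E; ring.
  - intros E; apply Hne; rewrite E; ring.
Qed.

Lemma Ex_mono t f g : (forall h, hist_prob p s h <> 0 -> f h <= g h) -> Ex s t f <= Ex s t g.
Proof.
  intros H. unfold Ex. apply lsum_le. intros h _.
  destruct (Req_dec (hist_prob p s h) 0) as [E|E].
  - rewrite E; lra.
  - apply Rmult_le_compat_l; auto. apply hp_nonneg.
Qed.

Lemma Ex_ext t f g : (forall h, hist_prob p s h <> 0 -> f h = g h) -> Ex s t f = Ex s t g.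
Proof.
  intros H. apply Rle_antisym; apply Ex_mono; intros h Hh; rewrite H; auto; lra.
Qed.

Lemma Ex_nonneg t f : (forall h, hist_prob p s h <> 0 -> 0 <= f h) -> 0 <= Ex s t f.
Proof.
  intros H. unfold Ex. apply lsum_nonneg. intros h _.
  destruct (Req_dec (hist_prob p s h) 0) as [E|E].
  - rewrite E; lra.
  - apply Rmult_le_pos; auto. apply hp_nonneg.
Qed.

Lemma sx_ge h a (V : act -> R) B : (forall x, s h a x <> 0 -> B <= V x) -> B <= sx s h a V.
Proof.
  intros H. unfold sx. pose proof (s_sum h a).
  assert (forall x, s h a x * B <= s h a x * V x).
  { intros x. destruct (Req_dec (s h a x) 0) as [E|E].
    - rewrite E; lra.
    - apply Rmult_le_compat_l; auto. apply s_nonneg. }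
  pose proof (H1 Wait); pose proof (H1 GoL); pose proof (H1 GoR).
  replace B with (B * (s h a Wait + s h a GoL + s h a GoR)) by (rewrite H0; ring). lra.
Qed.

Lemma sx_le h a (V : act -> R) B : (forall x, s h a x <> 0 -> V x <= B) -> sx s h a V <= B.
Proof.
  intros H. unfold sx. pose proof (s_sum h a).
  assert (forall x, s h a x * V x <= s h a x * B).
  { intros x. destruct (Req_dec (s h a x) 0) as [E|E].
    - rewrite E; lra.
    - apply Rmult_le_compat_l; auto. apply s_nonneg. }
  pose proof (H1 Wait); pose proof (H1 GoL); pose proof (H1 GoR).
  replace B with (B * (s h a Wait + s h a GoL + s h a GoR)) by (rewrite H0; ring). lra.
Qed.

Lemma sx_eq h a (V : act -> R) B : (forall x, s h a x <> 0 -> V x = B) -> sx s h a V = B.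
Proof.
  intros H. apply Rle_antisym; [apply sx_le|apply sx_ge]; intros x Hx; rewrite H; auto; lra.
Qed.

Lemma sx_plus_const h a (V : act -> R) c : sx s h a (fun x => c + V x) = c + sx s h a V.
Proof. unfold sx. pose proof (s_sum h a). replace c with (c * 1) at 4 by ring. rewrite <- H. ring. Qed.

Lemma step_const h K : step s (fun _ => K) h = K.
Proof.
  unfold step. rewrite (lsum_ext _ _ (fun a => cfg_prob p a * K)).
  apply cfg_const. intros a _. f_equal. unfold sx. pose proof (s_sum h a).
  replace K with (K * 1) at 4 by ring. rewrite <- H. ring.
Qed.

End ExSec.

Lemma telescope_le (F : nat -> nat -> R) (g : nat -> R) :
  (forall j k, F j (S k) <= g j + F (S j) k) ->
  forall k j, F j k <= rsum (fun i => g (j + i)%nat) k + F (j + k)%nat 0%nat.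
Proof.
  intros H k. induction k; intros j.
  - change (rsum (fun i => g (j + i)%nat) 0) with 0. rewrite Nat.add_0_r. lra.
  - rewrite rsum_shift. specialize (IHk (S j)). specialize (H j k).
    rewrite (rsum_ext (fun i => g (j + S i)%nat) (fun i => g (S j + i)%nat)).
    + rewrite Nat.add_0_r. replace (j + S k)%nat with (S j + k)%nat by lia. lra.
    + intros; f_equal; lia.
Qed.

Lemma telescope_ge (F : nat -> nat -> R) (g : nat -> R) :
  (forall j k, g j + F (S j) k <= F j (S k)) ->
  forall k j, rsum (fun i => g (j + i)%nat) k + F (j + k)%nat 0%nat <= F j k.
Proof.
  intros H k. induction k; intros j.
  - change (rsum (fun i => g (j + i)%nat) 0) with 0. rewrite Nat.add_0_r. lra.
  - rewrite rsum_shift. specialize (IHk (S j)). specialize (H j k).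
    rewrite (rsum_ext (fun i => g (j + S i)%nat) (fun i => g (S j + i)%nat)).
    + rewrite Nat.add_0_r. replace (j + S k)%nat with (S j + k)%nat by lia. lra.
    + intros; f_equal; lia.
Qed.

End P3.
Import P3.

Module P4.

Lemma cfgA p n j K X Y : (j < n)%nat ->
  lsum (all_cfgs n) (fun a => cfg_prob p a * (K + if nth j a false then X else Y)) =
  K + p * X + (1 - p) * Y.
Proof.
  intros Hj. rewrite (cfg1 p n j _ (fun b => K + if b then X else Y)); auto. ring.
Qed.

Lemma cfgB p n j k K X Y Z U : (j < n)%nat -> (k < n)%nat -> j <> k ->
  lsum (all_cfgs n) (fun a => cfg_prob p a * (K + if nth j a false then
       (if nth k a false then X else Y) else (if nth k a false then Z else U))) =
  K + p * p * X + p * (1 - p) * Y + (1 - p) * p * Z + (1 - p) * (1 - p) * U.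
Proof.
  intros Hj Hk Hjk.
  rewrite (cfg2 p n j k _ (fun b c => K + if b then (if c then X else Y) else (if c then Z else U)));
    auto. ring.
Qed.

Ltac natsplit :=
  repeat match goal with
  | |- context [(?a <? ?b)%nat] => destruct (Nat.ltb_spec a b); try lia
  | |- context [(?a =? ?b)%nat] => destruct (Nat.eqb_spec a b); try lia
  end.

Section Game.
Variables (l1 l2 : nat) (p : R).
Hypotheses (Hl1 : (1 <= l1)%nat) (Hl2 : (1 <= l2)%nat) (Hp : 0 < p <= 1).

Notation L := (l1 + l2)%nat.
Definition ip := / p.
Definition aa := / (p * (2 - p)).

Lemma p_ip : p * ip = 1.
Proof. unfold ip. field. lra. Qed.

Lemma aa_eq : p * (2 - p) * aa = 1.
Proof. unfold aa. field. split; lra. Qed.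

Lemma ip_ge1 : 1 <= ip.
Proof.
  unfold ip. replace 1 with (/ 1) by field. apply Rinv_le_contravar; lra.
Qed.

Lemma aa_ge1 : 1 <= aa.
Proof.
  unfold aa. replace 1 with (/ 1) by field. apply Rinv_le_contravar; [|nra].
  apply Rmult_lt_0_compat; lra.
Qed.

Definition psiS (w0 w1 : R) (v : nat) (c0 c1 : bool) : R :=
  match c0, c1 with
  | true, true => 0
  | true, false => w1 * (INR L - INR v) * ip
  | false, true => w0 * INR v * ip
  | false, false =>
      if (v <? l1)%nat then ((w0 + w1) * INR v + w1 * INR L) * ip
      else if (l1 <? v)%nat then ((w0 + w1) * (INR L - INR v) + w0 * INR L) * ip
      else (w0 + w1) * (aa + (INR L - 1) * ip)
  end.

Definition Wsw (w0 w1 : R) (c0 c1 : bool) : R :=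
  (if c0 then 0 else w0) + (if c1 then 0 else w1).

Definition Plw w0 w1 := ((w0 + w1) * (INR l1 - 1) + w1 * INR L) * ip.
Definition Prw w0 w1 := ((w0 + w1) * (INR L - INR l1 - 1) + w0 * INR L) * ip.

Definition Bw (w0 w1 : R) (v : nat) (c0 c1 : bool) (a : cfg) : R :=
  Wsw w0 w1 c0 c1 +
  match c0, c1 with
  | true, true => 0
  | true, false => if nth v a false then w1 * (INR L - INR v - 1) * ip else psiS w0 w1 v c0 c1
  | false, true => if nth (v - 1) a false then w0 * (INR v - 1) * ip else psiS w0 w1 v c0 c1
  | false, false =>
      if (v <? l1)%nat then
        (if nth (v - 1) a false then ((w0 + w1) * (INR v - 1) + w1 * INR L) * ip
         else psiS w0 w1 v c0 c1)
      else if (l1 <? v)%nat then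
        (if nth v a false then ((w0 + w1) * (INR L - INR v - 1) + w0 * INR L) * ip
         else psiS w0 w1 v c0 c1)
      else
        (if nth (l1 - 1) a false then
           (if nth l1 a false then (Plw w0 w1 + Prw w0 w1) / 2 else Plw w0 w1)
         else (if nth l1 a false then Prw w0 w1 else psiS w0 w1 v c0 c1))
  end.

Definition Jst (v : nat) (c0 c1 : bool) : Prop :=
  (v <= L)%nat /\ (v = 0%nat -> c0 = true) /\ (v = L -> c1 = true).

Lemma SUM w0 w1 v c0 c1 : Jst v c0 c1 ->
  lsum (all_cfgs L) (fun a => cfg_prob p a * Bw w0 w1 v c0 c1 a) = psiS w0 w1 v c0 c1.
Proof.
  intros [HvL [H0 HL]]. unfold Bw.
  destruct c0, c1.
  - rewrite cfg_const. unfold Wsw, psiS; ring.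
  - rewrite cfgA.
    + unfold Wsw, psiS, ip. field. lra.
    + assert (v <> L) by (intro E; specialize (HL E); discriminate). lia.
  - rewrite cfgA.
    + unfold Wsw, psiS, ip. field. lra.
    + assert (v <> 0%nat) by (intro E; specialize (H0 E); discriminate). lia.
  - assert (v <> L) by (intro E; specialize (HL E); discriminate).
    assert (v <> 0%nat) by (intro E; specialize (H0 E); discriminate).
    unfold psiS; natsplit.
    + rewrite cfgA; [|lia]. unfold Wsw, ip. field. lra.
    + rewrite cfgA; [|lia]. unfold Wsw, ip. field. lra.
    + assert (v = l1) by lia. subst v.
      rewrite cfgB; try lia. unfold Wsw, Plw, Prw, ip, aa. rewrite plus_INR. field. split; lra.
Qed.

End Game.

End P4.
Import P4.

Module P5.

Ltac inr_goal :=
  repeat (rewrite minus_INR by lia); repeat rewrite plus_INR; repeat rewrite INR_1; repeat rewrite INR_0.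

Ltac rle a b := assert (INR a <= INR b) by (apply le_INR; lia).
Ltac rlt a b := assert (INR a + 1 <= INR b) by (rewrite <- INR_1, <- plus_INR; apply le_INR; lia).
Ltac req a b := assert (INR a = INR b) by (f_equal; lia).

Ltac rw_eq x e := let Hq := fresh in assert (Hq : INR x = e) by
  (repeat rewrite <- INR_1; repeat rewrite <- plus_INR; try rewrite <- minus_INR by lia; f_equal; lia);
  rewrite Hq in *; clear Hq.

Ltac vfacts v l1 l2 :=
  try rle 1%nat v; try rle v (l1 + l2)%nat; try rlt v (l1 + l2)%nat;
  try rle l1 v; try rle v l1; try rlt l1 v; try rlt v l1;
  repeat rewrite plus_INR in *; repeat rewrite INR_1 in *;
  try rw_eq v 1; try rw_eq l1 1; try rw_eq l2 1;
  try rw_eq v (INR l1 + INR l2); try rw_eq v (INR l1 + INR l2 - 1);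
  try rw_eq v (INR l1 + 1); try rw_eq v (INR l1 - 1).

Section G2.
Variables (l1 l2 : nat) (p : R).
Hypotheses (Hl1 : (1 <= l1)%nat) (Hl2 : (1 <= l2)%nat) (Hp : 0 < p <= 1).
Notation L := (l1 + l2)%nat.
Notation ip := (ip p).
Notation aa := (aa p).
Notation psiS := (psiS l1 l2 p).
Notation Bw := (Bw l1 l2 p).
Notation Jst := (Jst l1 l2).

Ltac facts :=
  pose proof (ip_ge1 p Hp); pose proof (aa_ge1 p Hp);
  assert (0 <= INR l1) by apply pos_INR; assert (0 <= INR l2) by apply pos_INR;
  assert (1 <= INR l1) by (apply (le_INR 1); lia); assert (1 <= INR l2) by (apply (le_INR 1); lia);
  assert (0 <= INR l1 * ip) by (apply Rmult_le_pos; lra);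
  assert (0 <= INR l2 * ip) by (apply Rmult_le_pos; lra);
  assert (0 <= INR l1 * aa) by (apply Rmult_le_pos; lra);
  assert (0 <= INR l2 * aa) by (apply Rmult_le_pos; lra).

Lemma MOVE_LB v c0 c1 a x : Jst v c0 c1 -> feasb L a v x = true ->
  Bw (INR l1) (INR l2) v c0 c1 a <=
  Wsw (INR l1) (INR l2) c0 c1 +
  psiS (INR l1) (INR l2) (step_pos v x) (c0 || nz x && (0 =? edge_of v x)%nat)
       (c1 || nz x && (L - 1 =? edge_of v x)%nat).
Proof.
  intros [HvL [H0 HL]] Hf. facts.
  destruct x; cbn [step_pos edge_of nz orb andb feasb] in *.
  - destruct c0, c1; cbn [orb andb];
    unfold Bw, P4.psiS, Wsw, Plw, Prw; natsplit; try (let Hvl := fresh in assert (Hvl : v = l1) by lia; rewrite Hvl in *);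
    repeat match goal with |- context [nth ?j a false] => destruct (nth j a false) end;
    inr_goal; vfacts v l1 l2; try lra.
  - apply andb_prop in Hf. destruct Hf as [Hv Ha]. apply Nat.ltb_lt in Hv. unfold edge_active in Ha.
    destruct c0, c1; cbn [orb andb];
    unfold Bw, P4.psiS, Wsw, Plw, Prw; natsplit; try (let Hvl := fresh in assert (Hvl : v = l1) by lia; rewrite Hvl in *);
    try rewrite Ha;
    repeat match goal with |- context [nth ?j a false] => destruct (nth j a false) end;
    inr_goal; vfacts v l1 l2; try lra.
  - apply andb_prop in Hf. destruct Hf as [Hv Ha]. apply Nat.ltb_lt in Hv. unfold edge_active in Ha.
    destruct c0, c1; cbn [orb andb];
    unfold Bw, P4.psiS, Wsw, Plw, Prw; natsplit; try (let Hvl := fresh in assert (Hvl : v = l1) by lia; rewrite Hvl in *);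
    try rewrite Ha;
    repeat match goal with |- context [nth ?j a false] => destruct (nth j a false) end;
    inr_goal; vfacts v l1 l2; try lra.
Qed.
End G2.

End P5.
Import P5.

Module P6.

Section G3.
Variables (l1 l2 : nat) (p : R).
Hypotheses (Hl1 : (1 <= l1)%nat) (Hl2 : (1 <= l2)%nat) (Hp : 0 < p <= 1).
Notation L := (l1 + l2)%nat.
Notation ip := (ip p).
Notation aa := (aa p).
Notation psiS := (psiS l1 l2 p).
Notation Bw := (Bw l1 l2 p).
Notation Jst := (Jst l1 l2).

Definition Vx (w0 w1 : R) (v : nat) (c0 c1 : bool) (x : act) : R :=
  Wsw w0 w1 c0 c1 +
  psiS w0 w1 (step_pos v x) (c0 || nz x && (0 =? edge_of v x)%nat)
       (c1 || nz x && (L - 1 =? edge_of v x)%nat).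

Ltac solve_eq v a :=
  unfold Vx; cbn [orb andb nz step_pos edge_of]; unfold Bw, P4.psiS, Wsw, Plw, Prw; natsplit;
  try (let Hvl := fresh in assert (Hvl : v = l1) by lia; rewrite Hvl in *);
  repeat match goal with H : nth ?j a false = _ |- _ => rewrite H end;
  repeat match goal with |- context [nth ?j a false] => destruct (nth j a false) end;
  inr_goal; vfacts v l1 l2; try lra; try (unfold P4.ip; field; lra).

Lemma EQ_done w0 w1 v a x : Vx w0 w1 v true true x = Bw w0 w1 v true true a.
Proof. unfold Vx, Bw, Wsw; simpl; ring. Qed.

Lemma EQ_wait w0 w1 v c0 c1 a : Jst v c0 c1 ->
  (c0 = true -> c1 = false -> nth v a false = false) ->
  (c0 = false -> c1 = true -> nth (v - 1) a false = false) ->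
  (c0 = false -> c1 = false -> (v < l1)%nat -> nth (v - 1) a false = false) ->
  (c0 = false -> c1 = false -> (l1 < v)%nat -> nth v a false = false) ->
  (c0 = false -> c1 = false -> v = l1 -> nth (l1 - 1) a false = false /\ nth l1 a false = false) ->
  Vx w0 w1 v c0 c1 Wait = Bw w0 w1 v c0 c1 a.
Proof.
  intros [HvL [H0 HL]] A1 A2 A3 A4 A5.
  destruct c0, c1; cbn [orb andb nz step_pos].
  - apply EQ_done.
  - specialize (A1 eq_refl eq_refl). solve_eq v a.
  - specialize (A2 eq_refl eq_refl). solve_eq v a.
  - specialize (A3 eq_refl eq_refl). specialize (A4 eq_refl eq_refl). specialize (A5 eq_refl eq_refl).
    unfold Vx; cbn [orb andb nz step_pos edge_of]; unfold Bw, P4.psiS, Wsw; natsplit.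
    + rewrite A3 by lia. reflexivity.
    + rewrite A4 by lia. reflexivity.
    + assert (v = l1) by lia. subst v. destruct (A5 eq_refl) as [-> ->]. reflexivity.
Qed.

Lemma EQ_L w0 w1 v c0 c1 a : Jst v c0 c1 -> nth (v - 1) a false = true -> (0 < v)%nat ->
  c0 = false -> (c1 = true \/ (v < l1)%nat) ->
  Vx w0 w1 v c0 c1 GoL = Bw w0 w1 v c0 c1 a.
Proof.
  intros [HvL [H0 HL]] Ha Hv -> Hc. destruct c1; cbn [orb andb nz step_pos edge_of].
  - solve_eq v a.
  - destruct Hc as [Hc|Hc]; [discriminate|]. solve_eq v a.
Qed.

Lemma EQ_R w0 w1 v c0 c1 a : Jst v c0 c1 -> nth v a false = true -> (v < L)%nat ->
  c1 = false -> (c0 = true \/ (l1 < v)%nat) ->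
  Vx w0 w1 v c0 c1 GoR = Bw w0 w1 v c0 c1 a.
Proof.
  intros [HvL [H0 HL]] Ha Hv -> Hc. destruct c0; cbn [orb andb nz step_pos edge_of].
  - solve_eq v a.
  - destruct Hc as [Hc|Hc]; [discriminate|]. solve_eq v a.
Qed.

Lemma EQ_OL w0 w1 : Vx w0 w1 l1 false false GoL = (w0 + w1) + Plw l1 l2 p w0 w1.
Proof.
  unfold Vx; cbn [orb andb nz step_pos edge_of]. unfold P4.psiS, Wsw, Plw; natsplit;
  inr_goal; vfacts l1 l1 l2; try lra; try ring.
Qed.

Lemma EQ_OR w0 w1 : Vx w0 w1 l1 false false GoR = (w0 + w1) + Prw l1 l2 p w0 w1.
Proof.
  unfold Vx; cbn [orb andb nz step_pos edge_of]. unfold P4.psiS, Wsw, Prw; natsplit;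
  inr_goal; vfacts l1 l1 l2; try lra; try ring.
Qed.

Lemma Bw_O w0 w1 a : Bw w0 w1 l1 false false a =
  (w0 + w1) + (if nth (l1 - 1) a false then
           (if nth l1 a false then (Plw l1 l2 p w0 w1 + Prw l1 l2 p w0 w1) / 2 else Plw l1 l2 p w0 w1)
         else (if nth l1 a false then Prw l1 l2 p w0 w1 else psiS w0 w1 l1 false false)).
Proof.
  unfold Bw, Wsw. rewrite Nat.ltb_irrefl. ring_simplify. reflexivity.
Qed.

Lemma Pl_eq_Pr : Plw l1 l2 p (INR l1) (INR l2) = Prw l1 l2 p (INR l1) (INR l2).
Proof. unfold Plw, Prw. rewrite plus_INR. ring. Qed.

End G3.

End P6.
Import P6.

Module P7.

Lemma one_mass L O s h a x y : valid_strategy L O s -> s h a y = 1 -> s h a x <> 0 -> x = y.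
Proof.
  intros Hs Hy Hx. pose proof (s_sum L O s Hs h a).
  pose proof (s_nonneg L O s Hs h a Wait). pose proof (s_nonneg L O s Hs h a GoL).
  pose proof (s_nonneg L O s Hs h a GoR).
  destruct x, y; auto; exfalso; apply Hx; lra.
Qed.

Section G4.
Variables (l1 l2 : nat).
Hypotheses (Hl1 : (1 <= l1)%nat) (Hl2 : (1 <= l2)%nat).
Notation L := (l1 + l2)%nat.

Definition uL (h : hist) : bool :=
  let v := pos_after l1 h in (0 <? v)%nat && (v <=? l1)%nat && negb (mem_nat (v - 1) (crossed l1 h)).
Definition uR (h : hist) : bool :=
  let v := pos_after l1 h in (l1 <=? v)%nat && (v <? L)%nat && negb (mem_nat v (crossed l1 h)).

Lemma U_form h : untrav_out L l1 h = (if uL h then [GoL] else []) ++ (if uR h then [GoR] else []).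
Proof.
  unfold untrav_out, uL, uR, outgoing. cbv zeta.
  generalize (pos_after l1 h) as v. intros v.
  natsplit; cbn [filter edge_of];
  repeat match goal with |- context [(?a <=? ?b)%nat] => destruct (Nat.leb_spec a b); try lia end;
  cbn [andb]; try (subst v);
  repeat match goal with |- context [mem_nat ?e (crossed l1 h)] => destruct (mem_nat e (crossed l1 h)) end;
  reflexivity.
Qed.

Lemma UA_form h a : active_untrav_out L l1 h a =
  (if uL h && nth (pos_after l1 h - 1) a false then [GoL] else []) ++
  (if uR h && nth (pos_after l1 h) a false then [GoR] else []).
Proof.
  unfold active_untrav_out. rewrite U_form. unfold uL, uR. cbv zeta.
  generalize (pos_after l1 h) as v. intros v.
  destruct ((0 <? v)%nat) eqn:E1; destruct (v <=? l1)%nat; destruct (mem_nat (v - 1) (crossed l1 h));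
  destruct (l1 <=? v)%nat; destruct (v <? L)%nat eqn:E2; destruct (mem_nat v (crossed l1 h));
  cbn [andb negb app filter]; unfold feasb, edge_active; rewrite ?E1, ?E2; cbn [andb app filter];
  repeat match goal with |- context [nth ?j a false] => destruct (nth j a false) end; reflexivity.
Qed.

Variable s : strategy.
Hypothesis HD : is_DFS L l1 s.

Lemma DFS_beh h a x : s h a x <> 0 ->
  let v := pos_after l1 h in
  let aL := nth (v - 1) a false in
  let aR := nth v a false in
  (uL h && aL = true /\ x = GoL) \/ (uR h && aR = true /\ x = GoR) \/
  (uL h && aL = false /\ uR h && aR = false /\ uL h || uR h = true /\ x = Wait) \/
  (uL h = false /\ uR h = false /\
    ((v = l1 /\ x = Wait) \/
     ((v < l1)%nat /\ ((feasb L a v GoR = true /\ x = GoR) \/ (feasb L a v GoR = false /\ x = Wait))) \/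
     ((l1 < v)%nat /\ ((feasb L a v GoL = true /\ x = GoL) \/ (feasb L a v GoL = false /\ x = Wait))))).
Proof.
  intros Hx. cbv zeta. destruct HD as [Hval HDh]. specialize (HDh h a). cbv zeta in HDh.
  destruct HDh as [D1 [D2 D3]]. rewrite UA_form in D1, D2. rewrite U_form in D2, D3.
  destruct (uL h && nth (pos_after l1 h - 1) a false) eqn:EL.
  - assert (HUA : act_mem x ([GoL] ++ (if uR h && nth (pos_after l1 h) a false then [GoR] else [])) = true).
    { destruct (act_mem x _) eqn:E; auto. exfalso; apply Hx; apply D1; auto. simpl; discriminate. }
    destruct (uR h && nth (pos_after l1 h) a false) eqn:ER; destruct x; simpl in HUA; try discriminate; auto.
  - destruct (uR h && nth (pos_after l1 h) a false) eqn:ER.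
    + assert (HUA : act_mem x [GoR] = true).
      { destruct (act_mem x _) eqn:E; auto. exfalso; apply Hx; apply D1; auto. simpl; discriminate. }
      destruct x; simpl in HUA; try discriminate; auto.
    + destruct (uL h || uR h) eqn:EU.
      * right; right; left. repeat split; auto. apply (one_mass L l1 s h a x Wait Hval); auto.
        apply D2; auto. destruct (uL h), (uR h); simpl in *; try discriminate; auto.
      * right; right; right. apply orb_false_iff in EU. destruct EU as [E1 E2].
        rewrite E1, E2 in D3. simpl in D3. specialize (D3 eq_refl).
        split; auto. split; auto. unfold back in D3.
        destruct (Nat.eqb_spec (pos_after l1 h) l1).
        -- left. split; auto. apply (one_mass L l1 s h a x Wait Hval); auto.
        -- destruct (Nat.ltb_spec (pos_after l1 h) l1).
           ++ right; left. split; auto. destruct D3 as [F1 F2].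
              destruct (feasb L a (pos_after l1 h) GoR) eqn:F.
              ** left; split; auto. apply (one_mass L l1 s h a x GoR Hval); auto.
              ** right; split; auto. apply (one_mass L l1 s h a x Wait Hval); auto.
           ++ right; right. split; [lia|]. destruct D3 as [F1 F2].
              destruct (feasb L a (pos_after l1 h) GoL) eqn:F.
              ** left; split; auto. apply (one_mass L l1 s h a x GoL Hval); auto.
              ** right; split; auto. apply (one_mass L l1 s h a x Wait Hval); auto.
Qed.

End G4.

End P7.
Import P7.

Module P8.

Section G5.
Variables (l1 l2 : nat).
Hypotheses (Hl1 : (1 <= l1)%nat) (Hl2 : (1 <= l2)%nat).
Notation L := (l1 + l2)%nat.

Definition Inv (v : nat) (cr : nat -> bool) : Prop :=
  ((1 <= v <= l1)%nat /\ forall e, cr e = true <-> (v <= e < l1)%nat) \/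
  ((l1 < v <= L - 1)%nat /\ forall e, cr e = true <-> (l1 <= e < v)%nat) \/
  ((v <= L - 1)%nat /\ forall e, cr e = true <-> (e < Nat.max v l1)%nat) \/
  ((1 <= v <= L)%nat /\ forall e, cr e = true <-> (Nat.min v l1 <= e < L)%nat) \/
  ((v <= L)%nat /\ forall e, cr e = true <-> (e < L)%nat).

Definition Beh (v : nat) (cr : nat -> bool) (a : cfg) (x : act) : Prop :=
  let uL := (0 <? v)%nat && (v <=? l1)%nat && negb (cr (v - 1)%nat) in
  let uR := (l1 <=? v)%nat && (v <? L)%nat && negb (cr v) in
  let aL := nth (v - 1) a false in
  let aR := nth v a false in
  (uL && aL = true /\ x = GoL) \/ (uR && aR = true /\ x = GoR) \/
  (uL && aL = false /\ uR && aR = false /\ uL || uR = true /\ x = Wait) \/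
  (uL = false /\ uR = false /\
    ((v = l1 /\ x = Wait) \/
     ((v < l1)%nat /\ ((feasb L a v GoR = true /\ x = GoR) \/ (feasb L a v GoR = false /\ x = Wait))) \/
     ((l1 < v)%nat /\ ((feasb L a v GoL = true /\ x = GoL) \/ (feasb L a v GoL = false /\ x = Wait))))).

Lemma DFS_Beh s h a x : is_DFS L l1 s -> s h a x <> 0 ->
  Beh (pos_after l1 h) (fun e => mem_nat e (crossed l1 h)) a x.
Proof. intros HD Hx. exact (DFS_beh l1 l2 Hl1 Hl2 s HD h a x Hx). Qed.

Ltac bsimp Hcr :=
  repeat match goal with
  | H : (_ && _) = true |- _ => apply andb_prop in H; destruct H
  | H : (_ && _) = false |- _ => apply andb_false_iff in H; destruct H
  | H : (_ || _) = true |- _ => apply orb_true_iff in H; destruct H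
  | H : (_ || _) = false |- _ => apply orb_false_iff in H; destruct H
  | H : negb _ = true |- _ => apply negb_true_iff in H
  | H : negb _ = false |- _ => apply negb_false_iff in H
  | H : (_ <? _)%nat = true |- _ => apply Nat.ltb_lt in H
  | H : (_ <? _)%nat = false |- _ => apply Nat.ltb_ge in H
  | H : (_ <=? _)%nat = true |- _ => apply Nat.leb_le in H
  | H : (_ <=? _)%nat = false |- _ => apply Nat.leb_gt in H
  | H : ?cr ?e = true |- _ => apply Hcr in H
  | H : ?cr ?e = false |- _ => rewrite <- not_true_iff_false, Hcr in H
  end.

Ltac iff_solve Hcr := let e := fresh "e" in intro e; cbv beta; rewrite ?orb_false_r, ?orb_true_iff, ?Nat.eqb_eq, Hcr; lia.

Ltac inv_goal Hcr :=
  unfold Inv; cbn [step_pos nz andb edge_of];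
  first [ left; split; [lia | iff_solve Hcr]
        | right; left; split; [lia | iff_solve Hcr]
        | right; right; left; split; [lia | iff_solve Hcr]
        | right; right; right; left; split; [lia | iff_solve Hcr]
        | right; right; right; right; split; [lia | iff_solve Hcr] ].

Lemma Inv_step v cr a x : Inv v cr -> Beh v cr a x ->
  Inv (step_pos v x) (fun e => cr e || nz x && (e =? edge_of v x)%nat).
Proof.
  intros HI HB. unfold Beh in HB. cbv zeta in HB. unfold feasb, edge_active in HB.
  destruct HI as [[Hb Hcr]|[[Hb Hcr]|[[Hb Hcr]|[[Hb Hcr]|[Hb Hcr]]]]];
  destruct HB as [[B1 ->]|[[B1 ->]|[[B1 [B2 [B3 ->]]]|[B1 [B2 [[B3 ->]|[[B3 [[B4 ->]|[B4 ->]]]|[B3 [[B4 ->]|[B4 ->]]]]]]]]]];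
  bsimp Hcr; try lia;
  first [ inv_goal Hcr
        | destruct (Nat.eq_dec v 1); inv_goal Hcr
        | destruct (Nat.eq_dec v l1); inv_goal Hcr
        | destruct (Nat.eq_dec (v + 1) L); inv_goal Hcr
        | destruct (Nat.eq_dec v (l1 + 1)); inv_goal Hcr ].
Qed.

End G5.

Section G6.
Variables (l1 l2 : nat) (p : R).
Hypotheses (Hl1 : (1 <= l1)%nat) (Hl2 : (1 <= l2)%nat) (Hp : 0 < p <= 1).
Notation L := (l1 + l2)%nat.
Notation Inv := (Inv l1 l2).
Notation Beh := (Beh l1 l2).
Notation Vx := (Vx l1 l2 p).
Notation Bw := (Bw l1 l2 p).

Lemma Inv_J v cr : Inv v cr -> Jst l1 l2 v (cr 0%nat) (cr (L - 1)%nat).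
Proof.
  unfold Jst; intros [[Hb Hcr]|[[Hb Hcr]|[[Hb Hcr]|[[Hb Hcr]|[Hb Hcr]]]]];
  (split; [lia|split]); intros E;
  first [ apply Hcr; lia | exfalso; lia ].
Qed.

Lemma Inv_init : Inv l1 (fun e => mem_nat e []).
Proof. left. split; [lia|]. intros e. simpl. split; intros H; [discriminate|lia]. Qed.

Ltac bsimp2 Hcr :=
  repeat match goal with
  | H : (_ && _) = true |- _ => apply andb_prop in H; destruct H
  | H : (_ && _) = false |- _ => apply andb_false_iff in H; destruct H
  | H : (_ || _) = true |- _ => apply orb_true_iff in H; destruct H
  | H : (_ || _) = false |- _ => apply orb_false_iff in H; destruct H
  | H : negb _ = true |- _ => apply negb_true_iff in H
  | H : negb _ = false |- _ => apply negb_false_iff in H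
  | H : (_ <? _)%nat = true |- _ => apply Nat.ltb_lt in H
  | H : (_ <? _)%nat = false |- _ => apply Nat.ltb_ge in H
  | H : (_ <=? _)%nat = true |- _ => apply Nat.leb_le in H
  | H : (_ <=? _)%nat = false |- _ => apply Nat.leb_gt in H
  | H : ?cr ?e = true |- _ => apply Hcr in H
  | H : ?cr ?e = false |- _ => rewrite <- not_true_iff_false, Hcr in H
  end.

Ltac leaf HJ :=
  first [ apply EQ_done
        | apply (EQ_L l1 l2 p Hl1 Hl2); [exact HJ | assumption | lia | reflexivity | first [left; reflexivity | right; lia]]
        | apply (EQ_R l1 l2 p Hl1 Hl2); [exact HJ | assumption | lia | reflexivity | first [left; reflexivity | right; lia]]
        | apply (EQ_wait l1 l2 p Hl1 Hl2); [exact HJ | .. ];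
          intros; first [discriminate | (exfalso; lia) | assumption | (split; assumption)] ].

Lemma VAL s h a w0 w1 v cr : valid_strategy L l1 s -> Inv v cr ->
  (forall x, s h a x <> 0 -> Beh v cr a x) ->
  (Plw l1 l2 p w0 w1 = Prw l1 l2 p w0 w1 \/
   (v = l1 -> cr (l1 - 1)%nat = false -> cr l1 = false -> nth (l1 - 1) a false = true ->
    nth l1 a false = true -> s h a GoL = s h a GoR)) ->
  sx s h a (Vx w0 w1 v (cr 0%nat) (cr (L - 1)%nat)) = Bw w0 w1 v (cr 0%nat) (cr (L - 1)%nat) a.
Proof.
  intros Hs HI HB HT. pose proof (Inv_J v cr HI) as HJ.
  destruct (Nat.eq_dec v l1) as [Ev|Nv].
  -
    subst v.
    destruct (cr 0%nat) eqn:C0; destruct (cr (L - 1)%nat) eqn:C1.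
    + apply (sx_eq _ _ s Hs). intros; apply EQ_done.
    + try rewrite C0 in HJ; try rewrite C1 in HJ. apply (sx_eq _ _ s Hs); intros x Hx; specialize (HB x Hx); unfold P8.Beh in HB; cbv zeta in HB;
    unfold feasb, edge_active in HB;
    destruct HI as [[Hb Hcr]|[[Hb Hcr]|[[Hb Hcr]|[[Hb Hcr]|[Hb Hcr]]]]];
    destruct HB as [[B1 ->]|[[B1 ->]|[[B1 [B2 [B3 ->]]]|[B1 [B2 [[B3 ->]|[[B3 [[B4 ->]|[B4 ->]]]|[B3 [[B4 ->]|[B4 ->]]]]]]]]]];
    bsimp2 Hcr; try lia; leaf HJ.
    + try rewrite C0 in HJ; try rewrite C1 in HJ. apply (sx_eq _ _ s Hs); intros x Hx; specialize (HB x Hx); unfold P8.Beh in HB; cbv zeta in HB;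
    unfold feasb, edge_active in HB;
    destruct HI as [[Hb Hcr]|[[Hb Hcr]|[[Hb Hcr]|[[Hb Hcr]|[Hb Hcr]]]]];
    destruct HB as [[B1 ->]|[[B1 ->]|[[B1 [B2 [B3 ->]]]|[B1 [B2 [[B3 ->]|[[B3 [[B4 ->]|[B4 ->]]]|[B3 [[B4 ->]|[B4 ->]]]]]]]]]];
    bsimp2 Hcr; try lia; leaf HJ.
    + try rewrite C0 in HJ; try rewrite C1 in HJ.
      assert (Hcr : forall e, cr e = false).
      { intros e. destruct HI as [[Hb Hcr]|[[Hb Hcr]|[[Hb Hcr]|[[Hb Hcr]|[Hb Hcr]]]]];
        try (exfalso; lia);
        try (rewrite <- not_true_iff_false, Hcr in C0; exfalso; lia);
        try (rewrite <- not_true_iff_false, Hcr in C1; exfalso; lia).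
        rewrite <- not_true_iff_false, Hcr. lia. }
      destruct (nth (l1 - 1) a false) eqn:NL; destruct (nth l1 a false) eqn:NR.
      * assert (sW : s h a Wait = 0).
        { destruct (Req_dec (s h a Wait) 0) as [E|E]; auto. exfalso.
          specialize (HB Wait E). unfold P8.Beh in HB; cbv zeta in HB. rewrite !Hcr in HB.
          unfold feasb, edge_active in HB.
          destruct HB as [[B1 B]|[[B1 B]|[[B1 [B2 [B3 _]]]|[B1 [B2 _]]]]]; try discriminate;
          bsimp2 Hcr; try lia; congruence. }
        pose proof (s_sum _ _ s Hs h a) as Hsum.
        unfold sx. rewrite sW. rewrite (EQ_OL l1 l2 p Hl1 Hl2), (EQ_OR l1 l2 p Hl1 Hl2), Bw_O, NL, NR.
        destruct HT as [HT|HT].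
        -- rewrite HT. replace (s h a GoR) with (1 - s h a GoL) by lra. field.
        -- specialize (HT eq_refl (Hcr _) (Hcr _) eq_refl eq_refl).
           replace (s h a GoR) with (/2) by lra. replace (s h a GoL) with (/2) by lra. field.
      * apply (sx_eq _ _ s Hs); intros x Hx; specialize (HB x Hx); unfold P8.Beh in HB; cbv zeta in HB.
        rewrite !Hcr in HB. unfold feasb, edge_active in HB.
        destruct HB as [[B1 ->]|[[B1 ->]|[[B1 [B2 [B3 ->]]]|[B1 [B2 _]]]]]; bsimp2 Hcr; try lia; try congruence.
        rewrite (EQ_OL l1 l2 p Hl1 Hl2), Bw_O, NL, NR. ring.
      * apply (sx_eq _ _ s Hs); intros x Hx; specialize (HB x Hx); unfold P8.Beh in HB; cbv zeta in HB.
        rewrite !Hcr in HB. unfold feasb, edge_active in HB.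
        destruct HB as [[B1 ->]|[[B1 ->]|[[B1 [B2 [B3 ->]]]|[B1 [B2 _]]]]]; bsimp2 Hcr; try lia; try congruence.
        rewrite (EQ_OR l1 l2 p Hl1 Hl2), Bw_O, NL, NR. ring.
      * apply (sx_eq _ _ s Hs); intros x Hx; specialize (HB x Hx); unfold P8.Beh in HB; cbv zeta in HB.
        rewrite !Hcr in HB. unfold feasb, edge_active in HB.
        destruct HB as [[B1 ->]|[[B1 ->]|[[B1 [B2 [B3 ->]]]|[B1 [B2 _]]]]]; bsimp2 Hcr; try lia; try congruence;
        rewrite Bw_O, NL, NR; unfold Vx; cbn [step_pos nz andb orb]; unfold Wsw; ring.
  - destruct (cr 0%nat) eqn:C0; destruct (cr (L - 1)%nat) eqn:C1; rewrite ?C0, ?C1 in HJ;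
    apply (sx_eq _ _ s Hs); intros x Hx; specialize (HB x Hx); unfold P8.Beh in HB; cbv zeta in HB;
    unfold feasb, edge_active in HB;
    destruct HI as [[Hb Hcr]|[[Hb Hcr]|[[Hb Hcr]|[[Hb Hcr]|[Hb Hcr]]]]];
    destruct HB as [[B1 ->]|[[B1 ->]|[[B1 [B2 [B3 ->]]]|[B1 [B2 [[B3 ->]|[[B3 [[B4 ->]|[B4 ->]]]|[B3 [[B4 ->]|[B4 ->]]]]]]]]]];
    bsimp2 Hcr; try lia; leaf HJ.
Qed.

End G6.

End P8.
Import P8.

Module P9.

Section G7.
Variables (l1 l2 : nat) (p : R).
Hypotheses (Hl1 : (1 <= l1)%nat) (Hl2 : (1 <= l2)%nat) (Hp : 0 < p <= 1).
Notation L := (l1 + l2)%nat.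
Let Hp' : 0 <= p <= 1. Proof. lra. Qed.

Definition crh (h : hist) (e : nat) : bool := mem_nat e (crossed l1 h).
Definition PsiH (w0 w1 : R) (h : hist) : R :=
  psiS l1 l2 p w0 w1 (pos_after l1 h) (crh h 0) (crh h (L - 1)).
Definition WH (w0 w1 : R) (h : hist) : R := Wsw w0 w1 (crh h 0) (crh h (L - 1)).
Definition JH (h : hist) : Prop := Jst l1 l2 (pos_after l1 h) (crh h 0) (crh h (L - 1)).
Definition InvH (h : hist) : Prop := Inv l1 l2 (pos_after l1 h) (crh h).

Lemma crh_app h a x e : crh (h ++ [(a, x)]) e = crh h e || nz x && (e =? edge_of (pos_after l1 h) x)%nat.
Proof. unfold crh. apply cr_app. Qed.

Lemma PsiH_app w0 w1 h a x : PsiH w0 w1 (h ++ [(a, x)]) =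
  psiS l1 l2 p w0 w1 (step_pos (pos_after l1 h) x)
    (crh h 0 || nz x && (0 =? edge_of (pos_after l1 h) x)%nat)
    (crh h (L - 1) || nz x && (L - 1 =? edge_of (pos_after l1 h) x)%nat).
Proof. unfold PsiH. rewrite pos_app, !crh_app. reflexivity. Qed.

Lemma sx_Vx s h a w0 w1 : valid_strategy L l1 s ->
  sx s h a (Vx l1 l2 p w0 w1 (pos_after l1 h) (crh h 0) (crh h (L - 1))) =
  WH w0 w1 h + sx s h a (fun x => PsiH w0 w1 (h ++ [(a, x)])).
Proof.
  intros Hs. unfold Vx. rewrite (sx_plus_const L l1 s Hs). unfold WH. f_equal.
  unfold sx. rewrite !PsiH_app. reflexivity.
Qed.

Lemma JH_init : JH [].
Proof. unfold JH, Jst, crh. simpl. split; [lia|]. split; intros; lia. Qed.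

Lemma JH_step s h a x : valid_strategy L l1 s -> JH h -> s h a x <> 0 -> JH (h ++ [(a, x)]).
Proof.
  intros Hs [HvL [H0 HL]] Hx. pose proof (s_feas L l1 s Hs h a x Hx) as Hf.
  unfold JH, Jst. rewrite pos_app, !crh_app.
  destruct x; cbn [step_pos nz andb edge_of feasb] in *.
  - rewrite !orb_false_r. auto.
  - apply andb_prop in Hf. destruct Hf as [Hv _]. apply Nat.ltb_lt in Hv.
    split; [lia|]. split; intros E.
    + replace (0 =? pos_after l1 h - 1)%nat with true by (symmetry; apply Nat.eqb_eq; lia).
      apply orb_true_r.
    + lia.
  - apply andb_prop in Hf. destruct Hf as [Hv _]. apply Nat.ltb_lt in Hv.
    split; [lia|]. split; intros E.
    + lia.
    + replace (L - 1 =? pos_after l1 h)%nat with true by (symmetry; apply Nat.eqb_eq; lia).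
      apply orb_true_r.
Qed.

Lemma JH_reach s : valid_strategy L l1 s -> forall h, hist_prob p s h <> 0 -> JH h.
Proof.
  intros Hs. apply (reach p s JH JH_init). intros; eapply JH_step; eauto.
Qed.

Lemma Inv_ext v f g : (forall e, f e = g e) -> Inv l1 l2 v f -> Inv l1 l2 v g.
Proof.
  intros H HI. unfold Inv in *.
  destruct HI as [[Hb Hcr]|[[Hb Hcr]|[[Hb Hcr]|[[Hb Hcr]|[Hb Hcr]]]]];
  [left|right;left|right;right;left|right;right;right;left|right;right;right;right];
  (split; [exact Hb|]); intros e; rewrite <- H; apply Hcr.
Qed.

Lemma InvH_step s h a x : is_DFS L l1 s -> InvH h -> s h a x <> 0 -> InvH (h ++ [(a, x)]).
Proof.
  intros HD HI Hx. unfold InvH. rewrite pos_app.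
  apply (Inv_ext _ (fun e => crh h e || nz x && (e =? edge_of (pos_after l1 h) x)%nat)).
  - intros e. symmetry. apply crh_app.
  - eapply Inv_step; eauto. apply (DFS_Beh l1 l2 Hl1 Hl2 s h a x HD Hx).
Qed.

Lemma InvH_init : InvH [].
Proof. unfold InvH. apply (Inv_ext _ (fun e => mem_nat e [])); [reflexivity|]. apply Inv_init; auto. Qed.

Lemma InvH_reach s : is_DFS L l1 s -> forall h, hist_prob p s h <> 0 -> InvH h.
Proof.
  intros HD. apply (reach p s InvH InvH_init). intros; eapply InvH_step; eauto.
Qed.

Lemma InvH_JH h : InvH h -> JH h.
Proof. intros HI. apply Inv_J; auto. Qed.

Lemma lsum_cfg_minus (B : cfg -> R) K :
  lsum (all_cfgs L) (fun a => cfg_prob p a * (B a - K)) = lsum (all_cfgs L) (fun a => cfg_prob p a * B a) - K.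
Proof.
  rewrite (lsum_ext _ _ (fun a => cfg_prob p a * B a + (-K) * cfg_prob p a)) by (intros; ring).
  rewrite lsum_plus, lsum_scal.
  rewrite (lsum_ext _ (fun a => cfg_prob p a) (fun a => cfg_prob p a * 1)) by (intros; ring).
  rewrite cfg_const. ring.
Qed.

Lemma LB_step s h : valid_strategy L l1 s -> JH h ->
  PsiH (INR l1) (INR l2) h - WH (INR l1) (INR l2) h <= step L p s (PsiH (INR l1) (INR l2)) h.
Proof.
  intros Hs HJ. unfold step. unfold PsiH at 1.
  rewrite <- (SUM l1 l2 p Hl1 Hl2 Hp (INR l1) (INR l2) _ _ _ HJ).
  rewrite <- lsum_cfg_minus. apply lsum_le. intros a _.
  apply Rmult_le_compat_l; [apply cfg_nonneg; lra|].
  assert (Bw l1 l2 p (INR l1) (INR l2) (pos_after l1 h) (crh h 0) (crh h (L - 1)) a <=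
          sx s h a (Vx l1 l2 p (INR l1) (INR l2) (pos_after l1 h) (crh h 0) (crh h (L - 1)))).
  { apply (sx_ge L l1 s Hs). intros x Hx. apply (MOVE_LB l1 l2 p Hl1 Hl2 Hp); auto.
    apply (s_feas L l1 s Hs h a x Hx). }
  rewrite sx_Vx in H by auto. unfold WH in *. lra.
Qed.

Definition TIE (s : strategy) (w0 w1 : R) : Prop :=
  Plw l1 l2 p w0 w1 = Prw l1 l2 p w0 w1 \/
  (forall h a, pos_after l1 h = l1 -> crh h (l1 - 1)%nat = false -> crh h l1 = false ->
     nth (l1 - 1) a false = true -> nth l1 a false = true -> s h a GoL = s h a GoR).

Lemma DFS_step s w0 w1 h : is_DFS L l1 s -> TIE s w0 w1 -> InvH h ->
  step L p s (PsiH w0 w1) h = PsiH w0 w1 h - WH w0 w1 h.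
Proof.
  intros HD HT HI. pose proof (proj1 HD) as Hs. unfold step. unfold PsiH at 2.
  rewrite <- (SUM l1 l2 p Hl1 Hl2 Hp w0 w1 _ _ _ (InvH_JH h HI)).
  rewrite <- lsum_cfg_minus. apply lsum_ext. intros a _. f_equal.
  rewrite <- (VAL l1 l2 p Hl1 Hl2 s h a w0 w1 (pos_after l1 h) (crh h) Hs HI).
  - rewrite sx_Vx by auto. ring.
  - intros x Hx. apply (DFS_Beh l1 l2 Hl1 Hl2 s h a x HD Hx).
  - destruct HT as [HT|HT]; [left; auto|right]. intros E; apply HT; auto.
Qed.

End G7.

End P9.
Import P9.

Module P10.

Lemma sub_le_aux a b c : a <= b + c -> a - b <= c.
Proof. intros; lra. Qed.
Lemma sub_le_aux2 a b c d : a <= b + c -> d < a -> d - b <= c.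
Proof. intros; lra. Qed.

Section G8.
Variables (l1 l2 : nat) (p : R).
Hypotheses (Hl1 : (1 <= l1)%nat) (Hl2 : (1 <= l2)%nat) (Hp : 0 < p <= 1).
Notation L := (l1 + l2)%nat.
Let Hp' : 0 <= p <= 1. Proof. lra. Qed.
Notation WH := (WH l1 l2).
Notation PsiH := (PsiH l1 l2 p).
Notation JH := (JH l1 l2).
Notation crh := (crh l1).

Lemma Wsw_mono w0 w1 c0 c1 b0 b1 : 0 <= w0 -> 0 <= w1 -> Wsw w0 w1 (c0 || b0) (c1 || b1) <= Wsw w0 w1 c0 c1.
Proof. intros. unfold Wsw. destruct c0, c1, b0, b1; simpl; lra. Qed.

Lemma Wsw_nonneg w0 w1 c0 c1 : 0 <= w0 -> 0 <= w1 -> 0 <= Wsw w0 w1 c0 c1.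
Proof. intros. unfold Wsw. destruct c0, c1; simpl; lra. Qed.

Lemma WH_app w0 w1 h a x : WH w0 w1 (h ++ [(a, x)]) =
  Wsw w0 w1 (crh h 0 || nz x && (0 =? edge_of (pos_after l1 h) x)%nat)
    (crh h (L - 1) || nz x && (L - 1 =? edge_of (pos_after l1 h) x)%nat).
Proof. unfold P9.WH. rewrite !crh_app. reflexivity. Qed.

Lemma W_step_le s w0 w1 h : valid_strategy L l1 s -> 0 <= w0 -> 0 <= w1 ->
  step L p s (WH w0 w1) h <= WH w0 w1 h.
Proof.
  intros Hs H0 H1. unfold step. rewrite <- (cfg_const p L (WH w0 w1 h)).
  apply lsum_le. intros a _. apply Rmult_le_compat_l; [apply cfg_nonneg; lra|].
  apply (sx_le L l1 s Hs). intros x _. rewrite WH_app. apply Wsw_mono; auto.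
Qed.

Lemma W_step_ge s w0 w1 h : valid_strategy L l1 s -> 0 <= w0 -> 0 <= w1 ->
  (1 - p) ^ L * WH w0 w1 h <= step L p s (WH w0 w1) h.
Proof.
  intros Hs H0 H1. unfold step.
  set (F := repeat false L).
  assert (E : sx s h F (fun x => WH w0 w1 (h ++ [(F, x)])) = WH w0 w1 h).
  { apply (sx_eq L l1 s Hs). intros x Hx. pose proof (s_feas L l1 s Hs h F x Hx) as Hf.
    destruct x; cbn [feasb] in Hf; unfold edge_active, F in Hf; rewrite ?nth_repeat_false in Hf;
    rewrite ?andb_false_r in Hf; try discriminate.
    rewrite WH_app. cbn [nz andb]. rewrite !orb_false_r. reflexivity. }
  rewrite <- (cfg_prob_false p L). fold F. rewrite <- E.
  apply (lsum_ge_term _ (fun a => cfg_prob p a * sx s h a (fun x => WH w0 w1 (h ++ [(a, x)]))) F).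
  - apply allfalse_in.
  - intros a _. apply Rmult_le_pos; [apply cfg_nonneg; lra|].
    apply (sx_ge L l1 s Hs). intros. apply Wsw_nonneg; auto.
Qed.

Definition Phi (k : nat) (h : hist) : R := Rmin (PsiH (INR l1) (INR l2) h) (INR k).

Lemma W_or_done h : JH h -> 1 <= WH (INR l1) (INR l2) h \/
  (WH (INR l1) (INR l2) h = 0 /\ PsiH (INR l1) (INR l2) h = 0).
Proof.
  intros _. unfold P9.WH, P9.PsiH, Wsw.
  assert (1 <= INR l1) by (apply (le_INR 1); lia). assert (1 <= INR l2) by (apply (le_INR 1); lia).
  destruct (crh h 0), (crh h (L - 1)); simpl; try (left; lra). right; split; [lra|reflexivity].
Qed.

Lemma Phi_step s h k : p = 1 -> valid_strategy L l1 s -> JH h ->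
  Phi (S k) h - WH (INR l1) (INR l2) h <= step L p s (Phi k) h.
Proof.
  intros Hp1 Hs HJ. unfold step.
  assert (HB := SUM l1 l2 p Hl1 Hl2 Hp (INR l1) (INR l2) _ _ _ HJ).
  assert (HM : forall x, feasb L (repeat true L) (pos_after l1 h) x = true ->
     Bw l1 l2 p (INR l1) (INR l2) (pos_after l1 h) (crh h 0) (crh h (L - 1)) (repeat true L) <=
     WH (INR l1) (INR l2) h + PsiH (INR l1) (INR l2) (h ++ [(repeat true L, x)])).
  { intros x Hf. rewrite PsiH_app. apply (MOVE_LB l1 l2 p Hl1 Hl2 Hp); auto. }
  rewrite Hp1 in HB, HM |- *. rewrite cfg_p1 in HB |- *.
  apply (sx_ge L l1 s Hs). intros x Hx.
  pose proof (HM x (s_feas L l1 s Hs h _ x Hx)) as Hx2. rewrite HB in Hx2.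
  unfold Phi. rewrite S_INR.
  pose proof (W_or_done h HJ) as [HW|[HW HP]].
  - unfold P9.PsiH in *. rewrite Hp1 in *.
    pose proof (Rmin_l (psiS l1 l2 1 (INR l1) (INR l2) (pos_after l1 h) (crh h 0) (crh h (L - 1))) (INR k + 1)).
    pose proof (Rmin_r (psiS l1 l2 1 (INR l1) (INR l2) (pos_after l1 h) (crh h 0) (crh h (L - 1))) (INR k + 1)).
    unfold Rmin; repeat destruct Rle_dec; repeat match goal with H : ~ (_ <= _) |- _ => apply Rnot_le_lt in H end; try lra;
    first [apply sub_le_aux; exact Hx2 | eapply sub_le_aux2; [exact Hx2 | assumption]].
  - unfold P9.PsiH in *. rewrite Hp1 in *. rewrite HP, HW.
    assert (0 <= INR k) by apply pos_INR.
    rewrite Rmin_left by lra.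
    match goal with |- context [Rmin ?t (INR k)] => assert (HP2 : t = 0) end.
    { unfold P9.WH, Wsw in HW. rewrite !crh_app.
      destruct (P9.crh l1 h 0), (P9.crh l1 h (L - 1)); simpl in HW;
      try (assert (1 <= INR l1) by (apply (le_INR 1); lia); assert (1 <= INR l2) by (apply (le_INR 1); lia); lra).
      reflexivity. }
    rewrite HP2. rewrite Rmin_left by lra. lra.
Qed.

End G8.

End P10.
Import P10.

Module P11.

Section G9.
Variables (l1 l2 : nat) (p : R).
Hypotheses (Hl1 : (1 <= l1)%nat) (Hl2 : (1 <= l2)%nat) (Hp : 0 < p <= 1).
Notation L := (l1 + l2)%nat.
Let Hp' : 0 <= p <= 1. Proof. lra. Qed.
Notation WH := (WH l1 l2).
Notation PsiH := (PsiH l1 l2 p).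
Notation JH := (JH l1 l2).

Lemma wx_bounds w X M : 0 <= w -> 1 <= X -> X <= M -> 0 <= w * X /\ w <= w * X /\ w * X <= w * M.
Proof. intros. repeat split; nra. Qed.

Lemma wxy_bounds w0 w1 X Y M : 0 <= w0 -> 0 <= w1 -> 1 <= X -> 0 <= Y -> X + Y <= M ->
  0 <= (w0 + w1) * X + w1 * Y /\ w0 + w1 <= (w0 + w1) * X + w1 * Y /\
  (w0 + w1) * X + w1 * Y <= (w0 + w1) * M.
Proof. intros. repeat split; nra. Qed.

Lemma psi_bounds w0 w1 v c0 c1 : 0 <= w0 -> 0 <= w1 -> Jst l1 l2 v c0 c1 ->
  0 <= psiS l1 l2 p w0 w1 v c0 c1 /\ Wsw w0 w1 c0 c1 <= psiS l1 l2 p w0 w1 v c0 c1 /\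
  psiS l1 l2 p w0 w1 v c0 c1 <= (w0 + w1) * (aa p + 2 * INR L * ip p).
Proof.
  intros H0 H1 [HvL [Hv0 HvL2]].
  pose proof (ip_ge1 p Hp); pose proof (aa_ge1 p Hp).
  assert (1 <= INR l1) by (apply (le_INR 1); lia). assert (1 <= INR l2) by (apply (le_INR 1); lia).
  assert (HL : INR L = INR l1 + INR l2) by apply plus_INR.
  assert (0 <= INR v) by apply pos_INR.
  assert (INR v <= INR L) by (apply le_INR; lia).
  set (M := aa p + 2 * INR L * ip p).
  unfold P4.psiS, Wsw. destruct c0, c1.
  - assert (0 <= INR L * ip p) by (apply Rmult_le_pos; lra).
    repeat split; try lra. apply Rmult_le_pos; [lra|]. unfold M. lra.
  - assert (v <> L) by (intro E; specialize (HvL2 E); discriminate).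
    assert (INR v + 1 <= INR L) by (rewrite <- S_INR; apply le_INR; lia).
    replace (w1 * (INR L - INR v) * ip p) with (w1 * ((INR L - INR v) * ip p)) by ring.
    rewrite Rplus_0_l. assert (0 <= M) by (unfold M; nra).
    destruct (wx_bounds w1 ((INR L - INR v) * ip p) M) as [A [B C]]; auto; try (unfold M; nra).
    assert (0 <= w0 * M) by (apply Rmult_le_pos; lra). repeat split; lra.
  - assert (v <> 0%nat) by (intro E; specialize (Hv0 E); discriminate).
    assert (1 <= INR v) by (apply (le_INR 1); lia).
    replace (w0 * INR v * ip p) with (w0 * (INR v * ip p)) by ring.
    rewrite Rplus_0_r. assert (0 <= M) by (unfold M; nra).
    destruct (wx_bounds w0 (INR v * ip p) M) as [A [B C]]; auto; try (unfold M; nra).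
    assert (0 <= w1 * M) by (apply Rmult_le_pos; lra). repeat split; lra.
  - assert (v <> L) by (intro E; specialize (HvL2 E); discriminate).
    assert (v <> 0%nat) by (intro E; specialize (Hv0 E); discriminate).
    assert (1 <= INR v) by (apply (le_INR 1); lia).
    assert (INR v + 1 <= INR L) by (rewrite <- S_INR; apply le_INR; lia).
    destruct (v <? l1)%nat.
    + replace (((w0 + w1) * INR v + w1 * INR L) * ip p) with
        ((w0 + w1) * (INR v * ip p) + w1 * (INR L * ip p)) by ring.
      apply wxy_bounds; auto; unfold M; nra.
    + destruct (l1 <? v)%nat.
      * replace (((w0 + w1) * (INR L - INR v) + w0 * INR L) * ip p) with
          ((w1 + w0) * ((INR L - INR v) * ip p) + w0 * (INR L * ip p)) by ring.
        replace (w0 + w1) with (w1 + w0) by ring.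
        apply wxy_bounds; auto; unfold M; nra.
      * assert (0 <= (INR L - 1) * ip p) by nra.
        apply wx_bounds; auto; unfold M; nra.
Qed.

Lemma Psi_bounds w0 w1 h : 0 <= w0 -> 0 <= w1 -> JH h ->
  0 <= PsiH w0 w1 h /\ WH w0 w1 h <= PsiH w0 w1 h /\
  PsiH w0 w1 h <= (w0 + w1) * (aa p + 2 * INR L * ip p).
Proof. intros. apply psi_bounds; auto. Qed.

End G9.

End P11.
Import P11.

Module P12.

Lemma exists_nat_ge r : exists m : nat, r <= INR m.
Proof.
  destruct (archimed r) as [H1 H2]. exists (Z.to_nat (up r)).
  destruct (Z_le_gt_dec 0 (up r)) as [Hz|Hz].
  - rewrite INR_IZR_INZ, Z2Nat.id by lia. lra.
  - assert (IZR (up r) < 0) by (apply IZR_lt; lia). pose proof (pos_INR (Z.to_nat (up r))). lra.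
Qed.

Lemma rsum_mono_lb (e : nat -> R) m : (forall t, 0 <= e t) -> (forall t, e (S t) <= e t) ->
  INR m * e m <= rsum e m.
Proof.
  intros H0 H1. induction m.
  - simpl. change (rsum e 0) with 0. lra.
  - rewrite rsum_S, S_INR. pose proof (H1 m). pose proof (pos_INR m).
    assert (INR m * e (S m) <= INR m * e m) by (apply Rmult_le_compat_l; auto). lra.
Qed.

Section G10.
Variables (l1 l2 : nat) (p : R).
Hypotheses (Hl1 : (1 <= l1)%nat) (Hl2 : (1 <= l2)%nat) (Hp : 0 < p <= 1).
Notation L := (l1 + l2)%nat.
Let Hp' : 0 <= p <= 1. Proof. lra. Qed.
Notation WH := (WH l1 l2).
Notation PsiH := (PsiH l1 l2 p).
Notation JH := (JH l1 l2).
Notation Ex := (Ex L p).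


Lemma Ex_minus s t f g : Ex s t (fun h => f h - g h) = Ex s t f - Ex s t g.
Proof.
  unfold P3.Ex. rewrite (lsum_ext _ _ (fun h => hist_prob p s h * f h + (-1) * (hist_prob p s h * g h)))
    by (intros; ring).
  rewrite lsum_plus, lsum_scal. ring.
Qed.

Notation We := (WH (INR l1) (INR l2)).
Notation Pse := (PsiH (INR l1) (INR l2)).

Lemma E_LB s t : valid_strategy L l1 s -> Ex s t Pse <= Ex s t We + Ex s (S t) Pse.
Proof.
  intros Hs. rewrite Ex_S.
  assert (Ex s t (fun h => Pse h - We h) <= Ex s t (step L p s Pse)).
  { apply (Ex_mono L l1 p Hp' s Hs). intros h Hh.
    apply (LB_step l1 l2 p Hl1 Hl2 Hp s h Hs). apply (JH_reach l1 l2 p Hl1 Hl2 s Hs h Hh). }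
  rewrite Ex_minus in H. lra.
Qed.

Lemma E_DFS s w0 w1 t : is_DFS L l1 s -> TIE l1 l2 p s w0 w1 ->
  Ex s t (PsiH w0 w1) = Ex s t (WH w0 w1) + Ex s (S t) (PsiH w0 w1).
Proof.
  intros HD HT. pose proof (proj1 HD) as Hs. rewrite Ex_S.
  assert (Ex s t (step L p s (PsiH w0 w1)) = Ex s t (fun h => PsiH w0 w1 h - WH w0 w1 h)).
  { apply (Ex_ext L l1 p Hp' s Hs). intros h Hh.
    apply (DFS_step l1 l2 p Hl1 Hl2 Hp s w0 w1 h HD HT). apply (InvH_reach l1 l2 p Hl1 Hl2 s HD h Hh). }
  rewrite H, Ex_minus. ring.
Qed.

Lemma E_Wdec s w0 w1 t : valid_strategy L l1 s -> 0 <= w0 -> 0 <= w1 ->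
  Ex s (S t) (WH w0 w1) <= Ex s t (WH w0 w1).
Proof.
  intros Hs H0 H1. rewrite Ex_S. apply (Ex_mono L l1 p Hp' s Hs). intros h _.
  apply (W_step_le l1 l2 p Hp s w0 w1 h Hs H0 H1).
Qed.

Lemma E_Wpos s w0 w1 t : valid_strategy L l1 s -> 0 <= w0 -> 0 <= w1 ->
  (1 - p) ^ L * Ex s t (WH w0 w1) <= Ex s (S t) (WH w0 w1).
Proof.
  intros Hs H0 H1. rewrite Ex_S, <- Ex_scal. apply (Ex_mono L l1 p Hp' s Hs). intros h _.
  apply (W_step_ge l1 l2 p Hp s w0 w1 h Hs H0 H1).
Qed.

Lemma E_Wpow s w0 w1 n : valid_strategy L l1 s -> 0 <= w0 -> 0 <= w1 ->
  ((1 - p) ^ L) ^ n * (w0 + w1) <= Ex s n (WH w0 w1).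
Proof.
  intros Hs H0 H1. induction n.
  - rewrite Ex_0. unfold P9.WH, Wsw, crh. simpl. lra.
  - pose proof (E_Wpos s w0 w1 n Hs H0 H1). simpl.
    assert (0 <= (1 - p) ^ L) by (apply pow_le; lra).
    assert ((1 - p) ^ L * (((1 - p) ^ L) ^ n * (w0 + w1)) <= (1 - p) ^ L * Ex s n (WH w0 w1))
      by (apply Rmult_le_compat_l; auto). nra.
Qed.

Lemma E_Phi s t k : p = 1 -> valid_strategy L l1 s ->
  Ex s t (Phi l1 l2 p (S k)) <= Ex s t We + Ex s (S t) (Phi l1 l2 p k).
Proof.
  intros Hp1 Hs. rewrite Ex_S.
  assert (Ex s t (fun h => Phi l1 l2 p (S k) h - We h) <= Ex s t (step L p s (Phi l1 l2 p k))).
  { apply (Ex_mono L l1 p Hp' s Hs). intros h Hh.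
    apply (Phi_step l1 l2 p Hl1 Hl2 Hp s h k Hp1 Hs). apply (JH_reach l1 l2 p Hl1 Hl2 s Hs h Hh). }
  rewrite Ex_minus in H. lra.
Qed.

Definition SW s w0 w1 m := rsum (fun t => Ex s t (WH w0 w1)) m.

Lemma T_LB s m : valid_strategy L l1 s -> Pse [] <= SW s (INR l1) (INR l2) m + Ex s m Pse.
Proof.
  intros Hs. pose proof (telescope_le (fun j _ => Ex s j Pse) (fun j => Ex s j We)
    (fun j k => E_LB s j Hs) m 0). simpl in H. rewrite Ex_0 in H. exact H.
Qed.

Lemma T_DFS s w0 w1 m : is_DFS L l1 s -> TIE l1 l2 p s w0 w1 ->
  PsiH w0 w1 [] = SW s w0 w1 m + Ex s m (PsiH w0 w1).
Proof.
  intros HD HT.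
  pose proof (telescope_le (fun j _ => Ex s j (PsiH w0 w1)) (fun j => Ex s j (WH w0 w1))
    (fun j k => Req_le _ _ (E_DFS s w0 w1 j HD HT)) m 0).
  pose proof (telescope_ge (fun j _ => Ex s j (PsiH w0 w1)) (fun j => Ex s j (WH w0 w1))
    (fun j k => Req_le _ _ (eq_sym (E_DFS s w0 w1 j HD HT))) m 0).
  simpl in H, H0. rewrite Ex_0 in H, H0. unfold SW. lra.
Qed.

Lemma T_Phi s m : p = 1 -> valid_strategy L l1 s -> Phi l1 l2 p m [] <= SW s (INR l1) (INR l2) m.
Proof.
  intros Hp1 Hs. pose proof (telescope_le (fun j k => Ex s j (Phi l1 l2 p k)) (fun j => Ex s j We)
    (fun j k => E_Phi s j k Hp1 Hs) m 0). simpl in H. rewrite Ex_0 in H.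
  assert (Ex s m (Phi l1 l2 p 0) = 0).
  { rewrite (Ex_ext L l1 p Hp' s Hs m _ (fun h => 0 * 1)).
    - rewrite Ex_scal. ring.
    - intros h Hh. pose proof (JH_reach l1 l2 p Hl1 Hl2 s Hs h Hh) as HJ.
      destruct (Psi_bounds l1 l2 p Hl1 Hl2 Hp (INR l1) (INR l2) h (pos_INR _) (pos_INR _) HJ) as [A _].
      unfold Phi. simpl INR. rewrite Rmin_right by lra. ring. }
  unfold SW. lra.
Qed.

Lemma LB s X : valid_strategy L l1 s -> (X < Pse [] \/ (p = 1 /\ X <= Pse [])) ->
  exists m, X <= SW s (INR l1) (INR l2) m.
Proof.
  intros Hs [HX|[Hp1 HX]].
  - set (M := (INR l1 + INR l2) * (aa p + 2 * INR L * ip p)).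
    assert (HM : 0 < M).
    { unfold M. pose proof (ip_ge1 p Hp); pose proof (aa_ge1 p Hp).
      assert (1 <= INR l1) by (apply (le_INR 1); lia). assert (1 <= INR l2) by (apply (le_INR 1); lia).
      assert (0 <= INR L) by apply pos_INR. apply Rmult_lt_0_compat; [lra|]. nra. }
    set (d := Pse [] - X).
    assert (Hd : 0 < d) by (unfold d; lra).
    assert (H0 : 0 <= Pse []).
    { apply (Psi_bounds l1 l2 p Hl1 Hl2 Hp); try apply pos_INR. apply (JH_init l1 l2 Hl1 Hl2). }
    destruct (exists_nat_ge (M * Pse [] / d)) as [m Hm]. exists m.
    pose proof (T_LB s m Hs) as HT.
    set (e := fun t => Ex s t We).
    assert (He0 : forall t, 0 <= e t).
    { intros t. unfold e. apply (Ex_nonneg L l1 p Hp' s Hs). intros h _. apply Wsw_nonneg; apply pos_INR. }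
    assert (He1 : forall t, e (S t) <= e t).
    { intros t. unfold e. apply E_Wdec; auto; apply pos_INR. }
    pose proof (rsum_mono_lb e m He0 He1) as HS. fold e in HT.
    assert (HPK : Ex s m Pse <= M * e m).
    { unfold e. rewrite <- Ex_scal. apply (Ex_mono L l1 p Hp' s Hs). intros h Hh.
      pose proof (JH_reach l1 l2 p Hl1 Hl2 s Hs h Hh) as HJ.
      destruct (Psi_bounds l1 l2 p Hl1 Hl2 Hp (INR l1) (INR l2) h (pos_INR _) (pos_INR _) HJ) as [A [B C]].
      destruct (W_or_done l1 l2 p Hl1 Hl2 h HJ) as [HW|[HW HP]].
      - fold M in C. nra.
      - rewrite HP, HW. lra. }
    unfold SW in HT |- *. fold e in HT |- *.
    destruct (Rle_dec (M * e m) d).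
    + unfold d in r. lra.
    + assert (Hmd : M * Pse [] <= INR m * d).
      { apply (Rmult_le_compat_r d) in Hm; [|lra]. unfold Rdiv in Hm.
        rewrite Rmult_assoc, Rinv_l, Rmult_1_r in Hm by lra. exact Hm. }
      assert (INR m * d <= INR m * (M * e m)) by (apply Rmult_le_compat_l; [apply pos_INR|lra]).
      assert (M * Pse [] <= M * (INR m * e m)) by nra.
      assert (Pse [] <= INR m * e m) by (apply (Rmult_le_reg_l M); auto).
      unfold d in *. lra.
  - destruct (exists_nat_ge (Pse [])) as [m Hm]. exists m.
    pose proof (T_Phi s m Hp1 Hs). unfold Phi in H. rewrite Rmin_left in H by lra. lra.
Qed.

Lemma UB_DFS s w0 w1 n : is_DFS L l1 s -> TIE l1 l2 p s w0 w1 -> 0 <= w0 -> 0 <= w1 ->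
  SW s w0 w1 n <= PsiH w0 w1 [] - ((1 - p) ^ L) ^ n * (w0 + w1).
Proof.
  intros HD HT H0 H1. pose proof (proj1 HD) as Hs.
  rewrite (T_DFS s w0 w1 n HD HT).
  assert (Ex s n (WH w0 w1) <= Ex s n (PsiH w0 w1)).
  { apply (Ex_mono L l1 p Hp' s Hs). intros h Hh.
    pose proof (InvH_JH l1 l2 Hl1 Hl2 h (InvH_reach l1 l2 p Hl1 Hl2 s HD h Hh)) as HJ.
    apply (Psi_bounds l1 l2 p Hl1 Hl2 Hp w0 w1 h H0 H1 HJ). }
  pose proof (E_Wpow s w0 w1 n Hs H0 H1). lra.
Qed.

End G10.

End P12.
Import P12.

Module P13.

Section G11.
Variables (l1 l2 : nat) (p : R).
Hypotheses (Hl1 : (1 <= l1)%nat) (Hl2 : (1 <= l2)%nat) (Hp : 0 < p <= 1).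
Notation L := (l1 + l2)%nat.
Let Hp' : 0 <= p <= 1. Proof. lra. Qed.
Notation Ex := (Ex L p).
Notation SW := (SW l1 l2 p).

Definition ind0 (b : bool) : R := if b then 0 else 1.

Lemma surv_Ex s e t : surv L l1 p s e t = Ex s t (fun h => ind0 (mem_nat e (crossed l1 h))).
Proof. unfold surv, P3.Ex. rewrite fold_map_lsum. reflexivity. Qed.

Lemma SW_split s w0 w1 n : SW s w0 w1 n =
  w0 * rsum (fun t => surv L l1 p s 0 t) n + w1 * rsum (fun t => surv L l1 p s (L - 1) t) n.
Proof.
  unfold P12.SW. rewrite <- !rsum_scal, <- rsum_plus. apply rsum_ext. intros t _.
  rewrite !surv_Ex. rewrite <- !Ex_scal, <- Ex_plus. unfold P3.Ex. apply lsum_ext. intros h _.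
  unfold P9.WH, Wsw, crh, ind0. destruct (mem_nat 0 _), (mem_nat (L - 1) _); ring.
Qed.

Lemma pp_eps s n : partial_payoff L l1 p s (eps_star l1 l2) n = / INR L * SW s (INR l1) (INR l2) n.
Proof.
  unfold partial_payoff. rewrite rsum_two; [ | lia | ].
  - rewrite SW_split. unfold eps_star.
    replace ((L - 1 =? 0)%nat) with false by (symmetry; apply Nat.eqb_neq; lia).
    rewrite Nat.eqb_refl. simpl (0 =? 0)%nat. cbv iota.
    assert (INR L <> 0) by (apply not_0_INR; lia). rewrite Nat.eqb_refl. field. auto.
  - intros i Hi. unfold eps_star.
    replace ((i =? 0)%nat) with false by (symmetry; apply Nat.eqb_neq; lia).
    replace ((i =? L - 1)%nat) with false by (symmetry; apply Nat.eqb_neq; lia). ring.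
Qed.

Lemma Psi0 w0 w1 : PsiH l1 l2 p w0 w1 [] = (w0 + w1) * (aa p + (INR L - 1) * ip p).
Proof.
  unfold PsiH, P4.psiS, crh. simpl (pos_after l1 []). simpl (crossed l1 []).
  unfold mem_nat. simpl existsb. rewrite Nat.ltb_irrefl. reflexivity.
Qed.

Lemma key_LB s X : valid_strategy L l1 s ->
  (exists n, X <= PsiH l1 l2 p (INR l1) (INR l2) [] - ((1 - p) ^ L) ^ n * INR L) ->
  exists m, X <= SW s (INR l1) (INR l2) m.
Proof.
  intros Hs [n Hn]. apply (LB l1 l2 p Hl1 Hl2 Hp s X Hs).
  destruct (Req_dec p 1) as [E|E].
  - right. split; auto. assert (0 <= ((1 - p) ^ L) ^ n) by (apply pow_le; apply pow_le; lra).
    assert (0 <= INR L) by apply pos_INR. nra.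
  - left. assert (0 < ((1 - p) ^ L) ^ n) by (apply pow_lt; apply pow_lt; lra).
    assert (0 < INR L) by (apply lt_0_INR; lia). nra.
Qed.

Lemma DFS_br s s' n : is_DFS L l1 s -> valid_strategy L l1 s' ->
  exists m, partial_payoff L l1 p s (eps_star l1 l2) n <= partial_payoff L l1 p s' (eps_star l1 l2) m.
Proof.
  intros HD Hs'.
  destruct (key_LB s' (SW s (INR l1) (INR l2) n) Hs') as [m Hm].
  - exists n. rewrite plus_INR.
    apply (UB_DFS l1 l2 p Hl1 Hl2 Hp s (INR l1) (INR l2) n HD); try apply pos_INR.
    left. apply Pl_eq_Pr.
  - exists m. rewrite !pp_eps. apply Rmult_le_compat_l; auto.
    left. apply Rinv_0_lt_compat. apply lt_0_INR; lia.
Qed.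

End G11.

End P13.
Import P13.

Module P14.

Lemma act_eqb_true x y : act_eqb x y = true -> x = y.
Proof. destruct x, y; simpl; congruence. Qed.

Lemma act_mem_filter f x l : act_mem x (filter f l) = true -> f x = true.
Proof.
  induction l as [|y l IH]; simpl; [discriminate|].
  destruct (f y) eqn:E; simpl; auto.
  unfold act_mem in *. simpl. intros H. apply orb_true_iff in H. destruct H as [H|H]; auto.
  apply act_eqb_true in H. subst; auto.
Qed.

Section G12.
Variables (l1 l2 : nat).
Hypotheses (Hl1 : (1 <= l1)%nat) (Hl2 : (1 <= l2)%nat).
Notation L := (l1 + l2)%nat.
Notation U := (uDFS L l1).

Lemma uDFS_valid : valid_strategy L l1 U.
Proof.
  intros h a.
  assert (Hsub : forall x, act_mem x (active_untrav_out L l1 h a) = true ->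
            feasb L a (pos_after l1 h) x = true).
  { intros x. unfold active_untrav_out. apply act_mem_filter. }
  split; [|split].
  - intros x. unfold uDFS. cbv zeta.
    destruct (active_untrav_out L l1 h a) as [|y ys] eqn:E.
    + destruct (untrav_out L l1 h);
      [destruct (back l1 (pos_after l1 h)) as [b|]; [destruct (feasb L a (pos_after l1 h) b)|] |];
      unfold Defs.ind; destruct (act_eqb _ _); lra.
    + destruct (act_mem x (y :: ys)); [|lra]. left. apply Rinv_0_lt_compat. apply lt_0_INR. simpl; lia.
  - intros x Hf. unfold uDFS. cbv zeta.
    destruct (active_untrav_out L l1 h a) as [|y ys] eqn:E.
    + assert (HW : x <> Wait) by (intro; subst; simpl in Hf; discriminate).
      assert (HWb : act_eqb x Wait = false) by (destruct x; simpl; congruence).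
      destruct (untrav_out L l1 h) as [|z zs].
      * destruct (back l1 (pos_after l1 h)) as [b|].
        -- destruct (feasb L a (pos_after l1 h) b) eqn:Fb.
           ++ destruct (act_eqb x b) eqn:Exb; [|reflexivity]. apply act_eqb_true in Exb. subst. congruence.
           ++ rewrite HWb. reflexivity.
        -- rewrite HWb; reflexivity.
      * rewrite HWb; reflexivity.
    + destruct (act_mem x (y :: ys)) eqn:M; [|reflexivity].
      apply Hsub in M. congruence.
  - unfold uDFS. cbv zeta. rewrite (UA_form l1 l2 Hl1 Hl2 h a).
    destruct (uL l1 h && nth (pos_after l1 h - 1) a false);
    destruct (uR l1 l2 h && nth (pos_after l1 h) a false); simpl app.
    + unfold act_mem. simpl. field.
    + unfold act_mem. simpl. field.
    + unfold act_mem. simpl. field.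
    + rewrite (U_form l1 l2 Hl1 Hl2 h).
      destruct (uL l1 h); destruct (uR l1 l2 h); simpl app; unfold Defs.ind; simpl; try lra.
      destruct (back l1 (pos_after l1 h)) as [b|]; [|simpl; lra].
      destruct (feasb L a (pos_after l1 h) b); destruct b; simpl; lra.
Qed.

Lemma uDFS_DFS : is_DFS L l1 U.
Proof.
  split; [apply uDFS_valid|]. intros h a. cbv zeta. split; [|split].
  - intros Hne x Hx. unfold uDFS. cbv zeta.
    destruct (active_untrav_out L l1 h a); [contradiction|]. rewrite Hx. reflexivity.
  - intros HUA HU. unfold uDFS. cbv zeta. rewrite HUA.
    destruct (untrav_out L l1 h); [contradiction|]. reflexivity.
  - intros HU. assert (HUA : active_untrav_out L l1 h a = []).
    { unfold active_untrav_out. rewrite HU. reflexivity. }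
    unfold uDFS. cbv zeta. rewrite HUA, HU.
    destruct (back l1 (pos_after l1 h)) as [b|].
    + split; intros F; rewrite F; unfold Defs.ind; [destruct b|]; reflexivity.
    + reflexivity.
Qed.

Lemma uDFS_TIE p w0 w1 : TIE l1 l2 p U w0 w1.
Proof.
  right. intros h a Hv C1 C2 N1 N2. unfold uDFS. cbv zeta.
  rewrite (UA_form l1 l2 Hl1 Hl2 h a).
  assert (E1 : uL l1 h = true).
  { unfold uL. cbv zeta. rewrite Hv. unfold crh in C1. rewrite C1.
    replace (0 <? l1)%nat with true by (symmetry; apply Nat.ltb_lt; lia).
    rewrite Nat.leb_refl. reflexivity. }
  assert (E2 : uR l1 l2 h = true).
  { unfold uR. cbv zeta. rewrite Hv. unfold crh in C2. rewrite C2.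
    replace (l1 <? L)%nat with true by (symmetry; apply Nat.ltb_lt; lia).
    rewrite Nat.leb_refl. reflexivity. }
  rewrite E1, E2, Hv, N1, N2. reflexivity.
Qed.

End G12.

End P14.
Import P14.

Module P15.

Section G13.
Variables (l1 l2 : nat) (p : R).
Hypotheses (Hl1 : (1 <= l1)%nat) (Hl2 : (1 <= l2)%nat) (Hp : 0 < p <= 1).
Notation L := (l1 + l2)%nat.
Let Hp' : 0 <= p <= 1. Proof. lra. Qed.

Lemma Inv_cross0 v cr e : Inv l1 l2 v cr -> cr 0%nat = true -> (e < l1)%nat -> cr e = true.
Proof.
  intros HI H0 He.
  destruct HI as [[Hb Hcr]|[[Hb Hcr]|[[Hb Hcr]|[[Hb Hcr]|[Hb Hcr]]]]];
  apply Hcr in H0; apply Hcr; lia.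
Qed.

Lemma Inv_crossL v cr e : Inv l1 l2 v cr -> cr (L - 1)%nat = true -> (l1 <= e < L)%nat -> cr e = true.
Proof.
  intros HI H0 He.
  destruct HI as [[Hb Hcr]|[[Hb Hcr]|[[Hb Hcr]|[[Hb Hcr]|[Hb Hcr]]]]];
  apply Hcr in H0; apply Hcr; lia.
Qed.

Lemma surv_cmp s e f t : is_DFS L l1 s ->
  (forall v cr, Inv l1 l2 v cr -> cr f = true -> cr e = true) ->
  surv L l1 p s e t <= surv L l1 p s f t.
Proof.
  intros HD Hc. rewrite !surv_Ex. apply (Ex_mono L l1 p Hp' s (proj1 HD)). intros h Hh.
  pose proof (InvH_reach l1 l2 p Hl1 Hl2 s HD h Hh) as HI. unfold InvH in HI.
  unfold ind0. destruct (mem_nat f (crossed l1 h)) eqn:Ef.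
  - pose proof (Hc _ _ HI Ef) as He. unfold crh in He. rewrite He. lra.
  - destruct (mem_nat e (crossed l1 h)); lra.
Qed.

Lemma uDFS_q q n : hider_dist L q ->
  exists m, partial_payoff L l1 p (uDFS L l1) q n <= partial_payoff L l1 p (uDFS L l1) (eps_star l1 l2) m.
Proof.
  intros [Hq0 Hq1].
  set (Y := (aa p + (INR L - 1) * ip p) - ((1 - p) ^ L) ^ n).
  pose proof (uDFS_DFS l1 l2 Hl1 Hl2) as HD.
  assert (HY : forall e, (e < L)%nat -> rsum (fun t => surv L l1 p (uDFS L l1) e t) n <= Y).
  { intros e He. destruct (Nat.lt_ge_cases e l1) as [E|E].
    - apply Rle_trans with (rsum (fun t => surv L l1 p (uDFS L l1) 0 t) n).
      + apply rsum_le. intros t _. apply surv_cmp; auto. intros v cr HI Hc. eapply Inv_cross0; eauto.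
      + pose proof (UB_DFS l1 l2 p Hl1 Hl2 Hp (uDFS L l1) 1 0 n HD (uDFS_TIE l1 l2 Hl1 Hl2 p 1 0)) as H.
        rewrite SW_split, Psi0 in H by auto. unfold Y. lra.
    - apply Rle_trans with (rsum (fun t => surv L l1 p (uDFS L l1) (L - 1) t) n).
      + apply rsum_le. intros t _. apply surv_cmp; auto. intros v cr HI Hc. eapply Inv_crossL; eauto; lia.
      + pose proof (UB_DFS l1 l2 p Hl1 Hl2 Hp (uDFS L l1) 0 1 n HD (uDFS_TIE l1 l2 Hl1 Hl2 p 0 1)) as H.
        rewrite SW_split, Psi0 in H by auto. unfold Y. lra. }
  destruct (key_LB l1 l2 p Hl1 Hl2 Hp (uDFS L l1) (INR L * Y) (proj1 HD)) as [m Hm].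
  - exists n. rewrite Psi0 by auto. rewrite <- plus_INR. unfold Y. lra.
  - exists m. rewrite pp_eps by auto.
    unfold partial_payoff. apply Rle_trans with (Y * rsum q L).
    + apply rsum_wbound. intros e He. split; auto.
    + rewrite Hq1, Rmult_1_r. assert (0 < INR L) by (apply lt_0_INR; lia).
      replace Y with (/ INR L * (INR L * Y)) by (field; lra).
      apply Rmult_le_compat_l; [left; apply Rinv_0_lt_compat; lra | exact Hm].
Qed.

Lemma eps_dist : hider_dist L (eps_star l1 l2).
Proof.
  assert (0 < INR L) by (apply lt_0_INR; lia).
  split.
  - intros e _. unfold eps_star. destruct (e =? 0)%nat; [|destruct (e =? L - 1)%nat]; try lra;
    apply Rmult_le_pos; try apply pos_INR; left; apply Rinv_0_lt_compat; lra.
  - rewrite rsum_two; [ | lia | ].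
    + unfold eps_star. rewrite Nat.eqb_refl.
      replace ((L - 1 =? 0)%nat) with false by (symmetry; apply Nat.eqb_neq; lia).
      simpl (0 =? 0)%nat. cbv iota. rewrite Nat.eqb_refl. rewrite plus_INR in *. field. lra.
    + intros i Hi. unfold eps_star.
      replace ((i =? 0)%nat) with false by (symmetry; apply Nat.eqb_neq; lia).
      replace ((i =? L - 1)%nat) with false by (symmetry; apply Nat.eqb_neq; lia). reflexivity.
Qed.

End G13.


End P15.
Import P15.

Theorem mainTheorem11 (l1 l2 : nat) (p : R) :
  (1 <= l1)%nat -> (1 <= l2)%nat -> 0 < p <= 1 ->
  (* every depth-first strategy is a best response to eps* *)
  (forall s : strategy, is_DFS (l1 + l2) l1 s ->
     best_response (l1 + l2) l1 p s (eps_star l1 l2)) /\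
  (* uniform DFS and eps* are a pair of optimal strategies (saddle point) *)
  is_DFS (l1 + l2) l1 (uDFS (l1 + l2) l1) /\
  hider_dist (l1 + l2) (eps_star l1 l2) /\
  (forall (s : strategy) (q : nat -> R),
     valid_strategy (l1 + l2) l1 s -> hider_dist (l1 + l2) q ->
     payoff_le (l1 + l2) l1 p (uDFS (l1 + l2) l1) q
               (uDFS (l1 + l2) l1) (eps_star l1 l2) /\
     payoff_le (l1 + l2) l1 p (uDFS (l1 + l2) l1) (eps_star l1 l2)
               s (eps_star l1 l2)).
Proof.
  intros Hl1 Hl2 Hp. split; [|split; [|split]].
  - intros s HD. split; [exact (proj1 HD)|]. intros s' Hs' n.
    apply (DFS_br l1 l2 p Hl1 Hl2 Hp s s' n HD Hs').
  - apply uDFS_DFS; auto.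
  - apply eps_dist; auto.
  - intros s q Hs Hq. split.
    + intros n. apply (uDFS_q l1 l2 p Hl1 Hl2 Hp q n Hq).
    + intros n. apply (DFS_br l1 l2 p Hl1 Hl2 Hp _ s n (uDFS_DFS l1 l2 Hl1 Hl2) Hs).
Qed.
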